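(* Let $\psi\in\mathfrak M^+_\infty$, $\beta\in\mathbb R$, and let $n\in\mathbb N$ satisfy $\eta(n)-n\ge a>1$, $\mu(n)\ge b>2$. Define $$\Psi^*_{\beta,n}(t)=\psi(n)\sum_{k=2n-[\eta(n)]+1}^{n-1}\Big(1-\frac{n-k}{[\eta(n)]-n}\Big)\cos\Big(kt-\frac{\beta\pi}2\Big)+\sum_{k=n}^\infty\psi(k)\cos\Big(kt-\frac{\beta\pi}2\Big),$$ where $[\cdot]$ is the integer part. Then: (i) for $0<|t|\le\pi$, $\displaystyle|\Psi^*_{\beta,n}(t)|\le\pi^2\Big(\frac{2(b+1)^2}{b^2}+\frac{a}{a-1}\Big)\frac{\psi(n)}{\eta(n)-n}\,\frac1{t^2}$; (ii) for all $t\in\mathbb R$, $\displaystyle|\Psi^*_{\beta,n}(t)|\le\Big(\frac{2b}{b-2}+\frac1a+\frac12\Big)\psi(n)(\eta(n)-n)$; (iii) for every $1\le q\le\infty$, $\displaystyle\|\Psi^*_{\beta,n}\|_q\le2(1+\pi^2)\Big(\frac{2b}{b-2}+\frac{a}{a-1}\Big)\psi(n)(\eta(n)-n)^{1-1/q}$, where the norm is taken over one period.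
   Context: Let $\mathfrak M$ be the set of positive, continuous, convex-downward functions $\psi(t)$ of $t\ge1$ with $\lim_{t\to\infty}\psi(t)=0$. For $\psi\in\mathfrak M$ put $\eta(t)=\eta(\psi;t)=\psi^{-1}(\psi(t)/2)$, where $\psi^{-1}$ is the inverse function of $\psi$, and $\mu(t)=\mu(\psi;t)=t/(\eta(t)-t)$. Let $\mathfrak M^+_\infty$ be the set of $\psi\in\mathfrak M$ for which $\mu(\psi;t)$ increases monotonically to $\infty$ as $t\to\infty$. $\|g\|_q=(\int_0^{2\pi}|g|^q)^{1/q}$ for $1\le q<\infty$ and $\|g\|_\infty=\operatorname{ess\,sup}|g|$. *)

(* Defs.v *)
From Stdlib Require Import Reals Lra ZArith List ClassicalEpsilon.
Import ListNotations.
Open Scope R_scope.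

(** The class 𝔐: positive, continuous, convex (downward) functions on [1,∞)
    tending to 0.  psi is a total function R -> R; only its values on [1,∞)
    matter. *)
Definition in_M (psi : R -> R) : Prop :=
  (forall t, 1 <= t -> 0 < psi t) /\
  (forall t, 1 <= t -> forall eps, 0 < eps -> exists delta, 0 < delta /\
      forall s, 1 <= s -> Rabs (s - t) < delta -> Rabs (psi s - psi t) < eps) /\
  (forall x y l, 1 <= x -> 1 <= y -> 0 <= l <= 1 ->
      psi (l * x + (1 - l) * y) <= l * psi x + (1 - l) * psi y) /\
  (forall eps, 0 < eps -> exists T, forall t, T <= t -> Rabs (psi t) < eps).

(** eta(t) = psi^{-1}(psi(t)/2): the (unique, psi being strictly decreasing
    for psi in 𝔐) point s >= 1 with psi s = psi t / 2. *)
Definition eta (psi : R -> R) (t : R) : R :=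
  epsilon (inhabits 0) (fun s => 1 <= s /\ psi s = psi t / 2).

Definition mu (psi : R -> R) (t : R) : R := t / (eta psi t - t).

Definition in_M_plus_inf (psi : R -> R) : Prop :=
  in_M psi /\
  (forall s t, 1 <= s -> s <= t -> mu psi s <= mu psi t) /\
  (forall A, exists T, 1 <= T /\ forall t, T <= t -> A <= mu psi t).

(** Finite sum over integers lo..hi (empty if hi < lo). *)
Definition sumZ (lo hi : Z) (f : Z -> R) : R :=
  fold_right Rplus 0
    (map (fun i => f (lo + Z.of_nat i)%Z) (seq 0 (Z.to_nat (hi - lo + 1)))).

(** Value of a series (meaningful when it converges; limits are unique). *)
Definition series_value (u : nat -> R) : R :=
  epsilon (inhabits 0) (fun l => infinite_sum u l).

Definition ipart (x : R) : R := IZR (Int_part x).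

Definition tail_term (psi : R -> R) (beta : R) (n : nat) (t : R) (i : nat) : R :=
  psi (INR (n + i)) * cos (INR (n + i) * t - beta * PI / 2).

Definition PsiStar (psi : R -> R) (beta : R) (n : nat) (t : R) : R :=
  psi (INR n) *
    sumZ (2 * Z.of_nat n - Int_part (eta psi (INR n)) + 1)%Z (Z.of_nat n - 1)%Z
      (fun k => (1 - (INR n - IZR k) / (ipart (eta psi (INR n)) - INR n))
                * cos (IZR k * t - beta * PI / 2))
  + series_value (tail_term psi beta n t).

(** x^q for x >= 0, q >= 1 real (with 0^q = 0). *)
Definition rpow (x q : R) : R := if Rle_dec x 0 then 0 else Rpower x q.

(* Main.v *)
Require Import Defs.
From Stdlib Require Import Reals Lra Lia Psatz ZArith List ClassicalEpsilon.
Open Scope R_scope.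

Fixpoint sm (f : nat -> R) (N : nat) : R :=
  match N with O => 0 | S k => sm f k + f k end.

Lemma sm_ext f g N : (forall i, (i < N)%nat -> f i = g i) -> sm f N = sm g N.
Proof. induction N; simpl; intros H; auto. rewrite IHN by (intros; apply H; lia). rewrite H by lia; auto. Qed.

Lemma sm_le f g N : (forall i, (i < N)%nat -> f i <= g i) -> sm f N <= sm g N.
Proof. induction N; simpl; intros H; [lra|]. assert (f N <= g N) by (apply H; lia).
 assert (sm f N <= sm g N) by (apply IHN; intros; apply H; lia). lra. Qed.

Lemma sm_plus f g N : sm (fun i => f i + g i) N = sm f N + sm g N.
Proof. induction N; simpl; lra. Qed.

Lemma sm_scal c f N : sm (fun i => c * f i) N = c * sm f N.
Proof. induction N; simpl; [ring|]. rewrite IHN; ring. Qed.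

Lemma sm_const c N : sm (fun _ => c) N = INR N * c.
Proof. induction N; simpl sm; [simpl; ring|]. rewrite IHN, S_INR; ring. Qed.

Lemma sm_abs f N : Rabs (sm f N) <= sm (fun i => Rabs (f i)) N.
Proof. induction N; simpl; [rewrite Rabs_R0; lra|].
 eapply Rle_trans; [apply Rabs_triang|]. lra. Qed.

Lemma sm_nonneg f N : (forall i, (i < N)%nat -> 0 <= f i) -> 0 <= sm f N.
Proof. intros H; rewrite <- (sm_const 0 N) at 1 || idtac.
 replace 0 with (sm (fun _ => 0) N) by (rewrite sm_const; ring). apply sm_le; auto. Qed.

Lemma sm_split f a b : sm f (a + b) = sm f a + sm (fun i => f (a + i)%nat) b.
Proof. induction b; simpl. rewrite Nat.add_0_r; ring. rewrite Nat.add_succ_r; simpl. rewrite IHb; ring. Qed.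

Lemma sm_shift f b : sm f (S b) = f O + sm (fun i => f (S i)) b.
Proof. replace (S b) with (1 + b)%nat by lia. rewrite sm_split. simpl. ring. Qed.

Lemma sm_telescope f N : sm (fun i => f (S i) - f i) N = f N - f O.
Proof. induction N; simpl; [ring|]. rewrite IHN; ring. Qed.

Lemma sm_mono f N M : (N <= M)%nat -> (forall i, 0 <= f i) -> sm f N <= sm f M.
Proof. intros H Hf. replace M with (N + (M - N))%nat by lia. rewrite sm_split.
 assert (0 <= sm (fun i => f (N + i)%nat) (M - N)) by (apply sm_nonneg; auto). lra. Qed.

Lemma sm_sum_f f N : sum_f_R0 f N = sm f (S N).
Proof. induction N; simpl; [ring|]. rewrite IHN; simpl; ring. Qed.

Lemma fold_sm g K : fold_right Rplus 0 (map g (seq 0 K)) = sm g K.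
Proof. induction K; [reflexivity|]. rewrite seq_S, map_app, fold_right_app. simpl.
 rewrite <- IHK. generalize (map g (seq 0 K)). intros l; induction l; simpl; [ring|]. rewrite IHl; ring. Qed.

Lemma lim_le_const (u : nat -> R) (L K : R) (v : nat -> R) :
  Un_cv u L -> Un_cv v 0 -> (forall k, Rabs (u k) <= K + v k) -> Rabs L <= K.
Proof.
 intros Hu Hv H. destruct (Rle_dec (Rabs L) K) as [|Hn]; auto. exfalso.
 set (e := (Rabs L - K) / 2). assert (He : e > 0) by (unfold e; lra).
 destruct (Hu e He) as [N1 H1]. destruct (Hv e He) as [N2 H2].
 specialize (H1 (N1 + N2)%nat ltac:(lia)). specialize (H2 (N1 + N2)%nat ltac:(lia)).
 specialize (H (N1 + N2)%nat). unfold Rdist in *. rewrite Rminus_0_r in H2.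
 pose proof (Rabs_triang_inv L (u (N1+N2)%nat)). rewrite Rabs_minus_sym in H1.
 pose proof (Rle_abs (v (N1+N2)%nat)). unfold e in *. lra.
Qed.

Lemma exists_nat_ge (T : R) : exists N : nat, T <= INR N.
Proof. destruct (INR_unbounded T) as [N HN]; exists N; lra. Qed.

Lemma div_bounds n d : 0 < d -> 0 <= n <= d -> 0 <= n / d <= 1.
Proof. intros Hd Hn. split. apply Rmult_le_pos; [lra| left; apply Rinv_0_lt_compat; lra].
 apply Rmult_le_reg_r with d; auto. unfold Rdiv; rewrite Rmult_assoc, Rinv_l by lra. lra. Qed.

Lemma psi_decr psi : in_M psi -> forall x y, 1 <= x -> x < y -> psi y < psi x.
Proof.
 intros [Hpos [Hc [Hcv Hlim]]] x y Hx Hxy.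
 destruct (Rlt_dec (psi y) (psi x)) as [|Hn]; auto. exfalso.
 destruct (Hlim (psi x) (Hpos x Hx)) as [T HT].
 set (z := Rmax T (y + 1)). assert (Hz1 : T <= z) by apply Rmax_l.
 assert (Hz2 : y + 1 <= z) by apply Rmax_r.
 set (l := (z - y) / (z - x)).
 assert (Hl : 0 <= l <= 1). { unfold l; apply div_bounds; lra. }
 pose proof (Hcv x z l Hx ltac:(lra) Hl) as Hc1.
 replace (l * x + (1 - l) * z) with y in Hc1 by (unfold l; field; lra).
 assert (H1l : 0 < 1 - l). { unfold l. replace (1 - (z - y) / (z - x)) with ((y - x) / (z - x)) by (field; lra).
   apply Rmult_lt_0_compat; [lra| apply Rinv_0_lt_compat; lra]. }
 specialize (HT z Hz1). pose proof (Rle_abs (psi z)).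
 assert (psi y <= psi z). { apply Rmult_le_reg_l with (1 - l); auto.
   assert (l * psi y >= l * psi x) by (apply Rmult_ge_compat_l; lra). nra. }
 lra.
Qed.

Lemma psi_decr_le psi : in_M psi -> forall x y, 1 <= x -> x <= y -> psi y <= psi x.
Proof. intros H x y Hx Hxy. destruct (Req_dec x y). subst; lra.
 left; apply psi_decr; auto; lra. Qed.

Lemma psi_pos psi : in_M psi -> forall x, 1 <= x -> 0 < psi x.
Proof. intros [H _] ; auto. Qed.

Lemma Rmax_lip x y : Rabs (Rmax 1 y - Rmax 1 x) <= Rabs (y - x).
Proof. unfold Rmax; destruct (Rle_dec 1 y); destruct (Rle_dec 1 x);
 unfold Rabs; repeat match goal with |- context [Rcase_abs ?a] => destruct (Rcase_abs a) end; lra. Qed.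

Lemma psi_ext_cont psi : in_M psi -> continuity (fun s => psi (Rmax 1 s)).
Proof.
 intros [Hpos [Hc _]] x. unfold continuity_pt, continue_in, limit1_in, limit_in.
 intros eps Heps. simpl. unfold Rdist.
 destruct (Hc (Rmax 1 x) (Rmax_l _ _) eps Heps) as [d [Hd Hd2]].
 exists d; split; auto. intros y [_ Hy].
 apply Hd2. apply Rmax_l.
 pose proof (Rmax_lip x y). lra.
Qed.

Lemma eta_spec psi t : in_M psi -> 1 <= t ->
  1 <= eta psi t /\ psi (eta psi t) = psi t / 2.
Proof.
 intros HM Ht. unfold eta. apply epsilon_spec.
 pose proof HM as [Hpos [Hc [Hcv Hlim]]].
 assert (Hp := Hpos t Ht).
 destruct (Hlim (psi t / 2) ltac:(lra)) as [T HT].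
 set (T' := Rmax T (t + 1)).
 assert (HT1 : T <= T') by apply Rmax_l. assert (HT2 : t + 1 <= T') by apply Rmax_r.
 assert (Hg := psi_ext_cont psi HM).
 set (f := fun s => psi t / 2 - psi (Rmax 1 s)).
 assert (Hf : continuity f). { unfold f. apply continuity_minus; auto. apply continuity_const. intros ? ?; auto. }
 assert (Hmt : Rmax 1 t = t) by (apply Rmax_right; lra).
 assert (HmT : Rmax 1 T' = T') by (apply Rmax_right; lra).
 destruct (IVT f t T' Hf ltac:(lra)) as [z [Hz Hfz]].
 { unfold f; rewrite Hmt; lra. }
 { unfold f; rewrite HmT. specialize (HT T' HT1). pose proof (Rle_abs (psi T')). lra. }
 exists z. unfold f in Hfz. rewrite Rmax_right in Hfz by lra. split; lra.
Qed.

Lemma eta_gt psi t : in_M psi -> 1 <= t -> t < eta psi t.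
Proof. intros HM Ht. destruct (eta_spec psi t HM Ht) as [H1 H2].
 pose proof (psi_pos psi HM t Ht).
 destruct (Rlt_dec t (eta psi t)) as [|Hn]; auto. exfalso.
 assert (psi t <= psi (eta psi t)) by (apply psi_decr_le; auto; lra). lra. Qed.

Definition clip (z : R) := Rmin 1 (Rmax 0 z).

Lemma clip_cases z : (z <= 0 /\ clip z = 0) \/ (0 <= z <= 1 /\ clip z = z) \/ (1 <= z /\ clip z = 1).
Proof. unfold clip. destruct (Rle_dec z 0).
 - rewrite (Rmax_left 0 z) by lra. left; split; auto. apply Rmin_right; lra.
 - rewrite (Rmax_right 0 z) by lra. destruct (Rle_dec z 1).
   + right; left. split; [lra|]. apply Rmin_right; lra.
   + right; right. split; [lra|]. apply Rmin_left; lra. Qed.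

Lemma Rmin_cases x y : (x <= y /\ Rmin x y = x) \/ (y <= x /\ Rmin x y = y).
Proof. destruct (Rle_dec x y). left; split; auto; apply Rmin_left; auto. right; split; [lra|]; apply Rmin_right; lra. Qed.
Ltac rminc x y := destruct (Rmin_cases x y) as [[? ?]|[? ?]].

Ltac clipc z := destruct (clip_cases z) as [[? ?]|[[? ?]|[? ?]]].

Lemma clip_mono x y : x <= y -> clip x <= clip y.
Proof. intros. clipc x; clipc y; lra. Qed.

Lemma clip_sum (n : nat) y L : INR n <= y ->
  sm (fun i => clip (y - INR n - INR i)) L = Rmin y (INR n + INR L) - INR n.
Proof. intros Hy. induction L; simpl sm.
 - simpl INR. rewrite Rplus_0_r. unfold Rmin; destruct (Rle_dec y (INR n)); lra.
 - rewrite IHL, S_INR. clipc (y - INR n - INR L); rminc y (INR n + INR L); rminc y (INR n + (INR L + 1)); lra.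
Qed.

Definition Qf psi (n T : nat) (y : R) :=
  sm (fun i => psi (INR (n + 1 + i)) * clip (y - INR n - INR i)) T.

Lemma Q_diff psi n T x y : in_M psi -> 1 <= INR n -> INR n <= x -> x <= y ->
  Qf psi n T y - Qf psi n T x <= psi x * (y - x).
Proof.
 intros HM Hn Hx Hxy. unfold Qf.
 assert (E : forall f g : nat -> R, sm f T - sm g T = sm (fun i => f i - g i) T).
 { intros f g; induction T; simpl; [ring|]. rewrite <- IHT; ring. }
 rewrite E.
 apply Rle_trans with (sm (fun i => psi x * (clip (y - INR n - INR i) - clip (x - INR n - INR i))) T).
 - apply sm_le. intros i Hi.
   assert (Hc : clip (x - INR n - INR i) <= clip (y - INR n - INR i)) by (apply clip_mono; lra).
   destruct (Req_dec (clip (x - INR n - INR i)) (clip (y - INR n - INR i))) as [Heq|Hne].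
   + rewrite Heq. ring_simplify. lra.
   + assert (Hlt : x - INR n - INR i < 1).
     { destruct (Rlt_dec (x - INR n - INR i) 1); auto. exfalso. apply Hne.
       clipc (x - INR n - INR i); clipc (y - INR n - INR i); lra. }
     assert (psi (INR (n + 1 + i)) <= psi x).
     { apply psi_decr_le; auto. lra. rewrite !plus_INR. simpl INR. lra. }
     replace (psi (INR (n + 1 + i)) * clip (y - INR n - INR i) - psi (INR (n + 1 + i)) * clip (x - INR n - INR i))
       with (psi (INR (n + 1 + i)) * (clip (y - INR n - INR i) - clip (x - INR n - INR i))) by ring.
     apply Rmult_le_compat_r; lra.
 - rewrite sm_scal, <- E, !clip_sum by lra.
   pose proof (psi_pos psi HM x ltac:(lra)).
   apply Rmult_le_compat_l; [lra|]. rminc y (INR n + INR T); rminc x (INR n + INR T); lra.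
Qed.

Lemma Q_full psi n T y : INR n + INR T <= y ->
  Qf psi n T y = sm (fun i => psi (INR (n + 1 + i))) T.
Proof. intros H. unfold Qf. apply sm_ext. intros i Hi.
 assert (INR i + 1 <= INR T) by (rewrite <- S_INR; apply le_INR; lia).
 replace (clip (y - INR n - INR i)) with 1. ring.
 clipc (y - INR n - INR i); lra. Qed.

Lemma Q_zero psi n T : Qf psi n T (INR n) = 0.
Proof. unfold Qf. replace 0 with (sm (fun _ => 0) T) by (rewrite sm_const; ring).
 apply sm_ext. intros i Hi. pose proof (pos_INR i).
 replace (clip (INR n - INR n - INR i)) with 0. ring.
 clipc (INR n - INR n - INR i); lra. Qed.

Fixpoint chain psi (x : R) (j : nat) : R :=
  match j with O => x | S k => eta psi (chain psi x k) end.

Lemma chain_props psi x : in_M psi -> 1 <= x -> forall j,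
  x <= chain psi x j /\ psi (chain psi x j) = psi x / 2 ^ j.
Proof. intros HM Hx; induction j; simpl.
 - split; [lra| field].
 - destruct IHj as [H1 H2]. destruct (eta_spec psi (chain psi x j) HM ltac:(lra)) as [H3 H4].
   pose proof (eta_gt psi (chain psi x j) HM ltac:(lra)).
   split; [lra|]. rewrite H4, H2. field. apply pow_nonzero; lra. Qed.

Lemma sum_chain psi n T J : in_M psi -> 1 <= INR n ->
  INR n + INR T <= chain psi (INR n) J ->
  sm (fun i => psi (INR (n + 1 + i))) T <=
  sm (fun j => psi (chain psi (INR n) j) * (chain psi (INR n) (S j) - chain psi (INR n) j)) J.
Proof.
 intros HM Hn HJ. rewrite <- (Q_full psi n T _ HJ).
 replace (Qf psi n T (chain psi (INR n) J)) with
   (Qf psi n T (chain psi (INR n) J) - Qf psi n T (chain psi (INR n) O)) by (simpl; rewrite Q_zero; ring).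
 rewrite <- (sm_telescope (fun j => Qf psi n T (chain psi (INR n) j))).
 apply sm_le. intros j Hj.
 destruct (chain_props psi (INR n) HM Hn j) as [H1 _].
 pose proof (eta_gt psi (chain psi (INR n) j) HM ltac:(lra)).
 apply Q_diff; auto. simpl; lra.
Qed.

Lemma pow2_ge j : INR j <= 2 ^ j.
Proof. induction j. simpl; lra. rewrite S_INR. simpl.
 assert (1 <= 2 ^ j) by (apply pow_R1_Rle; lra). lra. Qed.

Lemma chain_reaches psi n T : in_M psi -> 1 <= INR n ->
  exists J, INR n + INR T <= chain psi (INR n) J.
Proof.
 intros HM Hn. pose proof (psi_pos psi HM (INR n) Hn) as HP.
 assert (HT : 0 < psi (INR n + INR T)) by (apply psi_pos; auto; pose proof (pos_INR T); lra).
 destruct (exists_nat_ge (psi (INR n) / psi (INR n + INR T))) as [J HJ].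
 exists J. destruct (chain_props psi (INR n) HM Hn J) as [H1 H2].
 destruct (Rle_dec (INR n + INR T) (chain psi (INR n) J)) as [|Hn']; auto. exfalso.
 assert (psi (INR n + INR T) < psi (chain psi (INR n) J)) by (apply psi_decr; auto; lra).
 rewrite H2 in H. pose proof (pow2_ge J).
 assert (psi (INR n) / psi (INR n + INR T) <= 2 ^ J) by lra.
 assert (0 < 2 ^ J) by (apply pow_lt; lra).
 apply Rmult_le_compat_r with (r := psi (INR n + INR T)) in H3; [|lra].
 unfold Rdiv in H3. rewrite Rmult_assoc, Rinv_l in H3 by lra.
 apply Rmult_lt_compat_r with (r := 2 ^ J) in H; auto. unfold Rdiv in H.
 rewrite Rmult_assoc, Rinv_l in H by lra. lra.
Qed.

Definition hyps_mu psi := forall s t, 1 <= s -> s <= t -> mu psi s <= mu psi t.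

Lemma d_le psi n e : in_M psi -> hyps_mu psi -> 1 <= INR n -> INR n <= e ->
  eta psi e - e <= e * (eta psi (INR n) - INR n) / INR n.
Proof.
 intros HM Hmu Hn He.
 pose proof (eta_gt psi e HM ltac:(lra)). pose proof (eta_gt psi (INR n) HM Hn).
 specialize (Hmu (INR n) e Hn He). unfold mu in Hmu.
 set (d := eta psi e - e) in *. set (h := eta psi (INR n) - INR n) in *.
 assert (Hd : 0 < d) by (unfold d; lra). assert (Hh : 0 < h) by (unfold h; lra).
 apply Rmult_le_reg_r with (INR n); [lra|]. unfold Rdiv. rewrite Rmult_assoc, Rinv_l, Rmult_1_r by lra.
 apply Rmult_le_reg_r with (/ (d * h)). apply Rinv_0_lt_compat; nra.
 replace (d * INR n * / (d * h)) with (INR n / h) by (field; lra).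
 replace (e * h * / (d * h)) with (e / d) by (field; lra). lra.
Qed.

Lemma chain_bound psi n : in_M psi -> hyps_mu psi -> 1 <= INR n -> forall j,
  chain psi (INR n) j <= INR n * (1 + (eta psi (INR n) - INR n) / INR n) ^ j.
Proof.
 intros HM Hmu Hn. induction j. simpl; lra.
 destruct (chain_props psi (INR n) HM Hn j) as [H1 _].
 pose proof (d_le psi n _ HM Hmu Hn H1). simpl chain. simpl pow.
 pose proof (eta_gt psi (INR n) HM Hn).
 set (h := eta psi (INR n) - INR n) in *. set (e := chain psi (INR n) j) in *.
 assert (Hr : 0 <= 1 + h / INR n). { assert (0 <= h / INR n) by (apply Rmult_le_pos; [unfold h; lra| left; apply Rinv_0_lt_compat; lra]). lra. }
 assert (Hq : eta psi e <= e * (1 + h / INR n)) by (unfold Rdiv in *; nra).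
 apply Rle_trans with (1 := Hq). 
 replace (INR n * ((1 + h / INR n) * (1 + h / INR n) ^ j)) with ((INR n * (1 + h / INR n) ^ j) * (1 + h / INR n)) by ring.
 apply Rmult_le_compat_r; auto.
Qed.

Lemma geom_sum r J : r <> 1 -> sm (fun j => r ^ j) J = (1 - r ^ J) / (1 - r).
Proof. intros Hr. induction J; simpl sm. simpl; field; lra.
 rewrite IHJ. simpl. field. lra. Qed.

Lemma geom_le r J : 0 <= r < 1 -> sm (fun j => r ^ j) J <= 1 / (1 - r).
Proof. intros Hr. rewrite geom_sum by lra. unfold Rdiv. apply Rmult_le_compat_r.
 left; apply Rinv_0_lt_compat; lra. pose proof (pow_le r J ltac:(lra)). lra. Qed.

Lemma tail_sum_bound psi n b : in_M psi -> hyps_mu psi -> 1 <= INR n -> 2 < b ->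
  b * (eta psi (INR n) - INR n) <= INR n -> forall T,
  sm (fun i => psi (INR (n + i))) T <=
    psi (INR n) * (1 + 2 * b * (eta psi (INR n) - INR n) / (b - 1)).
Proof.
 intros HM Hmu Hn Hb Hbh T.
 pose proof (psi_pos psi HM (INR n) Hn) as HP.
 pose proof (eta_gt psi (INR n) HM Hn) as Heta.
 set (h := eta psi (INR n) - INR n) in *.
 assert (Hh : 0 < h) by (unfold h; lra).
 set (rho := 1 + h / INR n).
 assert (Hrho : 1 <= rho <= 1 + 1 / b).
 { unfold rho. split. assert (0 <= h / INR n) by (apply Rmult_le_pos; [lra| left; apply Rinv_0_lt_compat; lra]). lra.
   assert (h / INR n <= 1 / b). { apply Rmult_le_reg_r with (INR n * b). nra.
     replace (h / INR n * (INR n * b)) with (h * b) by (field; lra).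
     replace (1 / b * (INR n * b)) with (INR n) by (field; lra). lra. } lra. }
 assert (Hb1 : 1 / b < 1 / 2). { apply Rmult_lt_reg_r with (2 * b). lra.
   replace (1 / b * (2 * b)) with 2 by (field; lra). lra. }
 destruct T as [|T]. { simpl. assert (0 <= 2 * b * h / (b - 1)). { apply Rmult_le_pos. nra. left; apply Rinv_0_lt_compat; lra. } nra. }
 rewrite sm_shift. rewrite Nat.add_0_r.
 destruct (chain_reaches psi n T HM Hn) as [J HJ].
 pose proof (sum_chain psi n T J HM Hn HJ) as HS.
 replace (sm (fun i => psi (INR (n + S i))) T) with (sm (fun i => psi (INR (n + 1 + i))) T)
   by (apply sm_ext; intros; f_equal; f_equal; lia).
 assert (HS2 : sm (fun j => psi (chain psi (INR n) j) * (chain psi (INR n) (S j) - chain psi (INR n) j)) J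
     <= psi (INR n) * h * sm (fun j => (rho / 2) ^ j) J).
 { rewrite <- sm_scal. apply sm_le. intros j Hj.
   destruct (chain_props psi (INR n) HM Hn j) as [H1 H2].
   pose proof (d_le psi n _ HM Hmu Hn H1) as Hd. pose proof (chain_bound psi n HM Hmu Hn j) as Hc.
   simpl chain. rewrite H2. fold h in Hd, Hc. fold rho in Hc.
   assert (eta psi (chain psi (INR n) j) - chain psi (INR n) j <= h * rho ^ j).
   { apply Rle_trans with (1 := Hd). unfold Rdiv. 
     replace (h * rho ^ j) with (INR n * rho ^ j * h * / INR n) by (field; lra).
     apply Rmult_le_compat_r. left; apply Rinv_0_lt_compat; lra. apply Rmult_le_compat_r; lra. }
   unfold Rdiv. rewrite Rpow_mult_distr, pow_inv.
   assert (0 < 2 ^ j) by (apply pow_lt; lra).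
   replace (psi (INR n) * h * (rho ^ j * / 2 ^ j)) with ((psi (INR n) * / 2 ^ j) * (h * rho ^ j)) by ring.
   apply Rmult_le_compat_l; auto. apply Rmult_le_pos. lra. left; apply Rinv_0_lt_compat; lra. }
 assert (HG : sm (fun j => (rho / 2) ^ j) J <= 1 / (1 - rho / 2)) by (apply geom_le; lra).
 assert (1 / (1 - rho / 2) <= 2 * b / (b - 1)).
 { apply Rmult_le_reg_r with ((1 - rho/2) * (b - 1)). nra.
   replace (1 / (1 - rho / 2) * ((1 - rho / 2) * (b - 1))) with (b - 1) by (field; lra).
   replace (2 * b / (b - 1) * ((1 - rho / 2) * (b - 1))) with (2 * b * (1 - rho / 2)) by (field; lra).
   assert (rho * b <= b + 1). { replace (b + 1) with ((1 + 1/b) * b) by (field; lra). nra. } nra. }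
 assert (psi (INR n) * h * sm (fun j => (rho / 2) ^ j) J <= psi (INR n) * h * (2 * b / (b - 1))).
 { apply Rmult_le_compat_l. nra. lra. }
 replace (psi (INR n) * (1 + 2 * b * h / (b - 1))) with (psi (INR n) + psi (INR n) * h * (2 * b / (b - 1))) by (field; lra).
 lra.
Qed.

Lemma D_bound psi n b : in_M psi -> hyps_mu psi -> 1 <= INR n -> 2 < b ->
  b * (eta psi (INR n) - INR n) <= INR n -> 1 < eta psi (INR n) - INR n ->
  psi (INR n) - psi (INR n + 1) <= psi (INR n) * (b + 1) / (b * (eta psi (INR n) - INR n)).
Proof.
 intros HM Hmu Hn Hb Hbh Hh1.
 pose proof HM as [Hpos [_ [Hcv _]]].
 pose proof (psi_pos psi HM (INR n) Hn) as HP.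
 pose proof (eta_gt psi (INR n) HM Hn) as Heta.
 set (h := eta psi (INR n) - INR n) in *.
 assert (Hh : 0 < h) by (unfold h; lra).
 set (x := INR n * INR n / (INR n + h)).
 assert (Hnx : INR n - x = INR n * h / (INR n + h)) by (unfold x; field; lra).
 assert (Hxpos : 0 < INR n - x) by (rewrite Hnx; apply Rmult_lt_0_compat; [nra| apply Rinv_0_lt_compat; lra]).
 assert (Hx1 : 1 <= x).
 { unfold x. apply Rmult_le_reg_r with (INR n + h). lra. unfold Rdiv.
   rewrite Rmult_assoc, Rinv_l, Rmult_1_r by lra.
   assert (2 * h <= INR n) by nra. nra. }
 pose proof (eta_gt psi x HM Hx1) as Hex.
 pose proof (Hmu x (INR n) Hx1 ltac:(lra)) as Hm. unfold mu in Hm. fold h in Hm.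
 set (dx := eta psi x - x) in *.
 assert (Hdx : 0 < dx) by (unfold dx; lra).
 assert (Hxh : x * h <= INR n * dx).
 { apply Rmult_le_reg_r with (/ (dx * h)). apply Rinv_0_lt_compat; nra.
   replace (x * h * / (dx * h)) with (x / dx) by (field; lra).
   replace (INR n * dx * / (dx * h)) with (INR n / h) by (field; lra). lra. }
 assert (Hetax : INR n <= eta psi x).
 { assert (x * (INR n + h) = INR n * INR n) by (unfold x; field; lra).
   assert (INR n * INR n <= INR n * eta psi x) by (unfold dx in Hxh; nra).
   apply Rmult_le_reg_l with (INR n); lra. }
 destruct (eta_spec psi x HM Hx1) as [_ Hsx].
 assert (Hpx : psi x <= 2 * psi (INR n)).
 { assert (psi (eta psi x) <= psi (INR n)) by (apply psi_decr_le; auto). lra. }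
 set (l := 1 / (INR n + 1 - x)).
 assert (Hl : 0 <= l <= 1) by (unfold l; apply div_bounds; lra).
 pose proof (Hcv x (INR n + 1) l Hx1 ltac:(lra) Hl) as Hc.
 replace (l * x + (1 - l) * (INR n + 1)) with (INR n) in Hc by (unfold l; field; lra).
 assert (Hc2 : (INR n + 1 - x) * psi (INR n) <= psi x + (INR n - x) * psi (INR n + 1)).
 { apply Rmult_le_compat_l with (r := INR n + 1 - x) in Hc; [|lra].
   replace ((INR n + 1 - x) * (l * psi x + (1 - l) * psi (INR n + 1))) with (psi x + (INR n - x) * psi (INR n + 1)) in Hc by (unfold l; field; lra).
   lra. }
 assert (HD : (INR n - x) * (psi (INR n) - psi (INR n + 1)) <= psi (INR n)) by nra.
 rewrite Hnx in HD.
 apply Rmult_le_reg_r with (INR n * h / (INR n + h)). apply Rmult_lt_0_compat; [nra| apply Rinv_0_lt_compat; lra].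
 rewrite Rmult_comm. apply Rle_trans with (1 := HD).
 replace (psi (INR n) * (b + 1) / (b * h) * (INR n * h / (INR n + h))) with
   (psi (INR n) * ((b + 1) * INR n / (b * (INR n + h)))) by (field; lra).
 rewrite <- (Rmult_1_r (psi (INR n))) at 1. apply Rmult_le_compat_l; [lra|].
 apply Rmult_le_reg_r with (b * (INR n + h)). nra.
 replace ((b + 1) * INR n / (b * (INR n + h)) * (b * (INR n + h))) with ((b + 1) * INR n) by (field; lra). nra.
Qed.

Lemma cv_shift (u : nat -> R) l N c : Un_cv u l -> Un_cv (fun k => u (N + k)%nat - c) (l - c).
Proof. intros H eps He. destruct (H eps He) as [N0 HN]. exists N0. intros k Hk.
 unfold Rdist. replace (u (N + k)%nat - c - (l - c)) with (u (N + k)%nat - l) by ring.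
 apply HN. lia. Qed.

Lemma cv_minus_const (u : nat -> R) l : Un_cv u l -> Un_cv (fun k => u k - l) 0.
Proof. intros H eps He. destruct (H eps He) as [N0 HN]. exists N0. intros k Hk.
 unfold Rdist. rewrite Rminus_0_r. apply HN. lia. Qed.

Lemma cv_zero : Un_cv (fun _ => 0) 0.
Proof. intros eps He. exists O. intros. unfold Rdist. rewrite Rminus_0_r, Rabs_R0. lra. Qed.

Section Ser.
End Ser.

Lemma psums_diff (u : nat -> R) (p : nat -> R) N M : (N <= M)%nat ->
  (forall i, Rabs (u i) <= p i) ->
  Rabs (sum_f_R0 u M - sum_f_R0 u N) <= sum_f_R0 p M - sum_f_R0 p N.
Proof.
 intros H Hp. rewrite !sm_sum_f. replace (S M) with (S N + (M - N))%nat by lia.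
 rewrite !sm_split. replace (sm u (S N) + sm (fun i => u (S N + i)%nat) (M - N) - sm u (S N))
   with (sm (fun i => u (S N + i)%nat) (M - N)) by ring.
 replace (sm p (S N) + sm (fun i => p (S N + i)%nat) (M - N) - sm p (S N))
   with (sm (fun i => p (S N + i)%nat) (M - N)) by ring.
 eapply Rle_trans. apply sm_abs. apply sm_le. intros; auto.
Qed.

Lemma pcv (p : nat -> R) S0 : (forall i, 0 <= p i) -> (forall T, sm p T <= S0) ->
  {L | Un_cv (sum_f_R0 p) L}.
Proof.
 intros Hp HS. apply growing_cv.
 - intros N. simpl. pose proof (Hp (S N)). lra.
 - exists S0. intros x [i Hi]. subst. rewrite sm_sum_f. auto.
Qed.

Lemma ucv (u : nat -> R) (p : nat -> R) S0 : (forall i, Rabs (u i) <= p i) ->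
  (forall T, sm p T <= S0) -> exists l, infinite_sum u l.
Proof.
 intros Hu HS. assert (Hp : forall i, 0 <= p i) by (intros i; pose proof (Rabs_pos (u i)); pose proof (Hu i); lra).
 destruct (pcv p S0 Hp HS) as [L HL].
 assert (HC := CV_Cauchy _ (exist _ L HL)).
 assert (Cauchy_crit (sum_f_R0 u)).
 { intros eps He. destruct (HC eps He) as [N HN]. exists N. intros a c Ha Hc.
   unfold Rdist in *. destruct (le_lt_dec a c).
   - pose proof (psums_diff u p a c l Hu). specialize (HN c a ltac:(lia) ltac:(lia)).
     rewrite Rabs_minus_sym. pose proof (Rle_abs (sum_f_R0 p c - sum_f_R0 p a)). lra.
   - pose proof (psums_diff u p c a ltac:(lia) Hu). specialize (HN a c ltac:(lia) ltac:(lia)).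
     pose proof (Rle_abs (sum_f_R0 p a - sum_f_R0 p c)). lra. }
 destruct (R_complete _ H) as [l Hl]. exists l. exact Hl.
Qed.

Lemma series_value_spec (u : nat -> R) (p : nat -> R) S0 : (forall i, Rabs (u i) <= p i) ->
  (forall T, sm p T <= S0) -> Un_cv (sum_f_R0 u) (series_value u).
Proof. intros Hu HS. unfold series_value. apply epsilon_spec. apply (ucv u p S0 Hu HS). Qed.

Lemma series_value_bound (u : nat -> R) (p : nat -> R) S0 : (forall i, Rabs (u i) <= p i) ->
  (forall T, sm p T <= S0) -> Rabs (series_value u) <= S0.
Proof.
 intros Hu HS. apply (lim_le_const (sum_f_R0 u) _ S0 (fun _ => 0)).
 apply (series_value_spec u p S0); auto. apply cv_zero.
 intros k. rewrite Rplus_0_r, sm_sum_f. eapply Rle_trans. apply sm_abs.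
 eapply Rle_trans. apply sm_le. intros; apply Hu. auto.
Qed.

Lemma series_value_rem (u : nat -> R) (p : nat -> R) S0 L N : (forall i, Rabs (u i) <= p i) ->
  (forall T, sm p T <= S0) -> Un_cv (sum_f_R0 p) L ->
  Rabs (series_value u - sum_f_R0 u N) <= L - sum_f_R0 p N.
Proof.
 intros Hu HS HL.
 apply (lim_le_const (fun k => sum_f_R0 u (N + k)%nat - sum_f_R0 u N) _ _ (fun k => sum_f_R0 p (N + k)%nat - L)).
 apply cv_shift. apply (series_value_spec u p S0); auto.
 apply cv_minus_const. intros eps He. destruct (HL eps He) as [N0 HN]. exists N0; intros; apply HN; lia.
 intros k. pose proof (psums_diff u p N (N + k) ltac:(lia) Hu). lra.
Qed.

Lemma series_cont (u : R -> nat -> R) (p : nat -> R) S0 :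
  (forall t i, Rabs (u t i) <= p i) -> (forall T, sm p T <= S0) ->
  (forall i x, continuity_pt (fun t => u t i) x) ->
  forall x, continuity_pt (fun t => series_value (u t)) x.
Proof.
 intros Hu HS Hc x.
 assert (Hp : forall i, 0 <= p i) by (intros i; pose proof (Rabs_pos (u 0 i)); pose proof (Hu 0 i); lra).
 destruct (pcv p S0 Hp HS) as [L HL].
 set (r := mkposreal 1 Rlt_0_1).
 apply (CVU_continuity (fun N t => sum_f_R0 (u t) N) (fun t => series_value (u t)) x r).
 - intros eps He. destruct (HL eps He) as [N HN]. exists N. intros k y Hk _.
   pose proof (series_value_rem (u y) p S0 L k (Hu y) HS HL).
   specialize (HN k Hk). unfold Rdist in HN. rewrite Rabs_minus_sym in HN.
   pose proof (Rle_abs (L - sum_f_R0 p k)). lra.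
 - intros N y _. induction N; simpl. apply Hc. apply continuity_pt_plus; auto.
 - unfold Boule. simpl. rewrite Rminus_diag, Rabs_R0. lra.
Qed.

Definition mm psi n : nat := Z.to_nat (Int_part (eta psi (INR n)) - Z.of_nat n).

Lemma mm_props psi n : 1 < eta psi (INR n) - INR n ->
  (1 <= mm psi n)%nat /\ INR (mm psi n) = ipart (eta psi (INR n)) - INR n /\
  Z.of_nat (mm psi n) = (Int_part (eta psi (INR n)) - Z.of_nat n)%Z /\
  INR (mm psi n) <= eta psi (INR n) - INR n /\ eta psi (INR n) - INR n - 1 < INR (mm psi n).
Proof.
 intros Hh. unfold mm, ipart. set (I := Int_part (eta psi (INR n))).
 destruct (base_Int_part (eta psi (INR n))) as [H1 H2]. fold I in H1, H2.
 assert (HI : (Z.of_nat n < I)%Z). { apply lt_IZR. rewrite <- INR_IZR_INZ. lra. }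
 assert (HZ : Z.of_nat (Z.to_nat (I - Z.of_nat n)) = (I - Z.of_nat n)%Z) by (apply Z2Nat.id; lia).
 assert (HR : INR (Z.to_nat (I - Z.of_nat n)) = IZR I - INR n).
 { rewrite INR_IZR_INZ, HZ, minus_IZR, <- INR_IZR_INZ. ring. }
 split; [lia|]. split; [auto|]. split; [auto|]. rewrite HR. lra.
Qed.

Lemma sum_lin K : sm (fun i => INR i + 1) K = INR K * (INR K + 1) / 2.
Proof. induction K; simpl sm. simpl; field. rewrite IHK, S_INR. field. Qed.

Definition Fsum psi beta n t :=
  sm (fun i => (INR i + 1) / INR (mm psi n) *
      cos ((INR n - INR (mm psi n) + 1 + INR i) * t - beta * PI / 2)) (mm psi n - 1).

Lemma PsiStar_eq psi beta n t : 1 < eta psi (INR n) - INR n ->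
  PsiStar psi beta n t = psi (INR n) * Fsum psi beta n t + series_value (tail_term psi beta n t).
Proof.
 intros Hh. destruct (mm_props psi n Hh) as [Hm1 [HmR [HmZ _]]].
 unfold PsiStar, sumZ, Fsum. f_equal. f_equal.
 rewrite fold_sm.
 replace (Z.to_nat (Z.of_nat n - 1 - (2 * Z.of_nat n - Int_part (eta psi (INR n)) + 1) + 1))
   with (mm psi n - 1)%nat by lia.
 apply sm_ext. intros i Hi.
 rewrite <- HmR.
 assert (E : IZR (2 * Z.of_nat n - Int_part (eta psi (INR n)) + 1 + Z.of_nat i) =
     INR n - INR (mm psi n) + 1 + INR i).
 { rewrite !plus_IZR, minus_IZR, mult_IZR, <- !INR_IZR_INZ.
   replace (IZR (Int_part (eta psi (INR n)))) with (INR n + INR (mm psi n)).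
   simpl IZR. ring. rewrite HmR. unfold ipart. ring. }
 rewrite E. f_equal. assert (0 < INR (mm psi n)) by (apply lt_0_INR; lia). field. lra.
Qed.

Lemma abel_id (c G : nat -> R) N :
  sm (fun j => c j * (G (S (S j)) - 2 * G (S j) + G j)) (S (S N)) =
  sm (fun i => (c i - 2 * c (S i) + c (S (S i))) * G (S (S i))) N
  + (c N - c (S N)) * G (S (S N)) + c (S N) * (G (S (S (S N))) - G (S (S N)))
  + c O * G O + (c 1%nat - 2 * c O) * G 1%nat.
Proof.
 induction N.
 - simpl. ring.
 - change (sm (fun j => c j * (G (S (S j)) - 2 * G (S j) + G j)) (S (S (S N)))) with
     (sm (fun j => c j * (G (S (S j)) - 2 * G (S j) + G j)) (S (S N)) + c (S (S N)) * (G (S (S (S (S N)))) - 2 * G (S (S (S N))) + G (S (S N)))).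
   rewrite IHN. simpl sm. ring.
Qed.

Lemma cos_id x t : sin (t / 2) <> 0 ->
  cos x = - cos (x + t) / (4 * sin (t / 2) ^ 2) - 2 * (- cos x / (4 * sin (t / 2) ^ 2))
          + - cos (x - t) / (4 * sin (t / 2) ^ 2).
Proof.
 intros Hs. rewrite cos_plus, cos_minus.
 set (u := t / 2) in *. replace t with (2 * u) by (unfold u; field).
 rewrite cos_2a_sin, sin_2a. field. auto.
Qed.

Definition cf psi n (j : nat) : R :=
  if (j <=? mm psi n)%nat then psi (INR n) * INR (j - 1) / INR (mm psi n)
  else psi (INR (n + (j - S (mm psi n)))).

Lemma cf_ramp psi n j : (1 <= mm psi n)%nat -> (j <= S (mm psi n))%nat ->
  cf psi n j = psi (INR n) / INR (mm psi n) * INR (j - 1).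
Proof.
 intros Hm Hj. unfold cf. assert (0 < INR (mm psi n)) by (apply lt_0_INR; lia).
 destruct (Nat.leb_spec j (mm psi n)). field; lra.
 assert (j = S (mm psi n)) by lia. subst. replace (S (mm psi n) - S (mm psi n))%nat with O by lia.
 rewrite Nat.add_0_r. replace (S (mm psi n) - 1)%nat with (mm psi n) by lia. field; lra.
Qed.

Lemma cf_tail psi n j : (S (mm psi n) <= j)%nat ->
  cf psi n j = psi (INR (n + (j - S (mm psi n)))).
Proof. intros Hj. unfold cf. destruct (Nat.leb_spec j (mm psi n)). lia. auto. Qed.

Lemma convex_step psi k : in_M psi -> 1 <= k -> psi (k + 1) <= (psi k + psi (k + 2)) / 2.
Proof. intros [_ [_ [Hcv _]]] Hk. pose proof (Hcv k (k+2) (1/2) Hk ltac:(lra) ltac:(lra)).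
 replace (1 / 2 * k + (1 - 1 / 2) * (k + 2)) with (k + 1) in H by field. lra. Qed.

Lemma e_sum_bound psi n N : in_M psi -> 1 <= INR n -> (1 <= mm psi n)%nat ->
  sm (fun i => Rabs (cf psi n i - 2 * cf psi n (S i) + cf psi n (S (S i)))) N <=
  2 * (psi (INR n) / INR (mm psi n)) + 2 * (psi (INR n) - psi (INR n + 1)).
Proof.
 intros HM Hn Hm. set (m := mm psi n) in *. set (s := psi (INR n) / INR m).
 set (f := fun i => Rabs (cf psi n i - 2 * cf psi n (S i) + cf psi n (S (S i)))).
 assert (Hmpos : 0 < INR m) by (apply lt_0_INR; lia).
 assert (HP := psi_pos psi HM (INR n) Hn).
 assert (Hs : 0 <= s) by (unfold s; apply Rmult_le_pos; [lra| left; apply Rinv_0_lt_compat; lra]).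
 assert (HD : 0 <= psi (INR n) - psi (INR n + 1)) by (assert (psi (INR n + 1) <= psi (INR n)) by (apply psi_decr_le; auto; lra); lra).
 apply Rle_trans with (sm f (S m + N)).
 { apply sm_mono. lia. intros; unfold f; apply Rabs_pos. }
 rewrite sm_split. change (sm f (S m)) with (sm f m + f m).
 assert (H1 : sm f m = s).
 { replace m with (S (m - 1)) by lia. rewrite sm_shift.
   replace (sm (fun i => f (S i)) (m - 1)) with 0.
   - unfold f. rewrite (cf_ramp psi n 0), (cf_ramp psi n 1), (cf_ramp psi n 2) by (fold m; lia).
     simpl INR. fold m; fold s. replace (s * 0 - 2 * (s * 0) + s * 1 + 0) with s by ring. rewrite Rabs_pos_eq; lra.
   - replace 0 with (sm (fun _ => 0) (m - 1)) by (rewrite sm_const; ring). apply sm_ext.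
     intros i Hi. unfold f. rewrite !(cf_ramp psi n) by (fold m; lia). fold m; fold s.
     replace (S i - 1)%nat with i by lia. replace (S (S i) - 1)%nat with (S i) by lia.
     replace (S (S (S i)) - 1)%nat with (S (S i)) by lia. rewrite !S_INR.
     replace (s * INR i - 2 * (s * (INR i + 1)) + s * (INR i + 1 + 1)) with 0 by ring.
     rewrite Rabs_R0; auto. }
 assert (H2 : f m = s + (psi (INR n) - psi (INR n + 1))).
 { unfold f. rewrite (cf_ramp psi n m) by (fold m; lia). rewrite (cf_ramp psi n (S m)) by (fold m; lia).
   rewrite (cf_tail psi n (S (S m))) by (fold m; lia). fold m; fold s.
   replace (S (S m) - S m)%nat with 1%nat by lia. replace (S m - 1)%nat with m by lia.
   rewrite plus_INR. simpl (INR 1).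
   assert (Hsm : s * INR m = psi (INR n)) by (unfold s; field; lra).
   assert (Hsm1 : s * INR (m - 1) = psi (INR n) - s) by (rewrite minus_INR by lia; simpl INR; lra).
   rewrite Hsm1, Hsm. rewrite Rabs_left1 by lra. ring. }
 assert (H3 : sm (fun i => f (S m + i)%nat) N <= psi (INR n) - psi (INR n + 1)).
 { set (g := fun i => - (psi (INR (n + i)) - psi (INR (n + S i)))).
   apply Rle_trans with (sm (fun i => g (S i) - g i) N).
   - apply sm_le. intros i Hi. unfold f, g. rewrite !(cf_tail psi n) by (fold m; lia).
     fold m. replace (S m + i - S m)%nat with i by lia. replace (S (S m + i) - S m)%nat with (S i) by lia.
     replace (S (S (S m + i)) - S m)%nat with (S (S i)) by lia.
     assert (Hk : 1 <= INR (n + i)) by (rewrite plus_INR; pose proof (pos_INR i); lra).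
     pose proof (convex_step psi (INR (n + i)) HM Hk) as Hc.
     replace (INR (n + i) + 1) with (INR (n + S i)) in Hc by (rewrite !plus_INR, S_INR; ring).
     replace (INR (n + i) + 2) with (INR (n + S (S i))) in Hc by (rewrite !plus_INR, !S_INR; ring).
     rewrite Rabs_pos_eq by lra. lra.
   - rewrite sm_telescope. unfold g. rewrite Nat.add_0_r.
     replace (INR (n + 1)) with (INR n + 1) by (rewrite plus_INR; simpl; ring).
     assert (psi (INR (n + S N)) <= psi (INR (n + N))).
     { apply psi_decr_le; auto. rewrite plus_INR; pose proof (pos_INR N); lra.
       apply le_INR; lia. }
     replace (INR (n + 1)) with (INR n + 1) by (rewrite plus_INR; simpl; ring). lra. }
 rewrite H1, H2. lra.
Qed.

Lemma psum_eq psi beta n t M : (1 <= mm psi n)%nat ->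
  sm (fun j => cf psi n j * cos ((INR n - INR (mm psi n) - 1 + INR j) * t - beta * PI / 2)) (S (mm psi n) + M)
  = psi (INR n) * Fsum psi beta n t + sm (tail_term psi beta n t) M.
Proof.
 intros Hm. rewrite sm_split. f_equal.
 - replace (S (mm psi n)) with (2 + (mm psi n - 1))%nat by lia. rewrite sm_split.
   unfold Fsum. rewrite <- sm_scal.
   replace (sm (fun j => cf psi n j * cos ((INR n - INR (mm psi n) - 1 + INR j) * t - beta * PI / 2)) 2) with 0.
   + rewrite Rplus_0_l. apply sm_ext. intros i Hi. rewrite cf_ramp by lia.
     replace (2 + i - 1)%nat with (S i) by lia. rewrite S_INR.
     replace (INR n - INR (mm psi n) - 1 + INR (2 + i)) with (INR n - INR (mm psi n) + 1 + INR i)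
       by (rewrite plus_INR; simpl; ring).
     assert (0 < INR (mm psi n)) by (apply lt_0_INR; lia). field. lra.
   + simpl sm. rewrite !cf_ramp by lia. simpl INR. ring.
 - apply sm_ext. intros i Hi. rewrite cf_tail by lia. unfold tail_term.
   replace (S (mm psi n) + i - S (mm psi n))%nat with i by lia.
   replace (INR n - INR (mm psi n) - 1 + INR (S (mm psi n) + i)) with (INR (n + i))
     by (rewrite !plus_INR, S_INR; ring). reflexivity.
Qed.

Lemma psi_to0 psi n : in_M psi -> Un_cv (fun k => psi (INR (n + k))) 0.
Proof.
 intros [_ [_ [_ Hl]]] eps He. destruct (Hl eps He) as [T HT].
 destruct (exists_nat_ge T) as [N HN]. exists N. intros k Hk. unfold Rdist. rewrite Rminus_0_r.
 apply HT. apply Rle_trans with (1 := HN). apply le_INR. lia.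
Qed.

Lemma cv_scal (u : nat -> R) c : Un_cv u 0 -> Un_cv (fun k => c * u k) 0.
Proof.
 intros H eps He. destruct (Req_dec c 0) as [Hc|Hc].
 - exists O. intros. unfold Rdist. rewrite Hc. rewrite Rmult_0_l, Rminus_0_r, Rabs_R0. lra.
 - assert (Hca : 0 < Rabs c) by (apply Rabs_pos_lt; auto).
   destruct (H (eps / Rabs c)) as [N HN]. apply Rmult_lt_0_compat; [lra| apply Rinv_0_lt_compat; lra].
   exists N. intros k Hk. specialize (HN k Hk). unfold Rdist in *. rewrite Rminus_0_r in *.
   rewrite Rabs_mult. apply Rmult_lt_reg_r with (/ Rabs c). apply Rinv_0_lt_compat; lra.
   replace (Rabs c * Rabs (u k) * / Rabs c) with (Rabs (u k)) by (field; lra). exact HN.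
Qed.

Lemma tail_abs psi beta n t i : in_M psi -> 1 <= INR n ->
  Rabs (tail_term psi beta n t i) <= psi (INR (n + i)).
Proof.
 intros HM Hn. unfold tail_term. rewrite Rabs_mult.
 assert (HP : 0 < psi (INR (n + i))) by (apply psi_pos; auto; rewrite plus_INR; pose proof (pos_INR i); lra).
 rewrite (Rabs_pos_eq (psi _)) by lra. pose proof (COS_bound (INR (n + i) * t - beta * PI / 2)).
 assert (Rabs (cos (INR (n + i) * t - beta * PI / 2)) <= 1) by (apply Rabs_le; lra). nra.
Qed.

Lemma abel_bound psi beta n b t : in_M psi -> hyps_mu psi -> 1 <= INR n -> 2 < b ->
  b * (eta psi (INR n) - INR n) <= INR n -> 1 < eta psi (INR n) - INR n -> sin (t / 2) <> 0 ->
  Rabs (PsiStar psi beta n t) <=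
  (2 * (psi (INR n) / INR (mm psi n)) + 2 * (psi (INR n) - psi (INR n + 1))) / (4 * sin (t / 2) ^ 2).
Proof.
 intros HM Hmu Hn Hb Hbh Hh Hs.
 destruct (mm_props psi n Hh) as [Hm1 _].
 rewrite PsiStar_eq by auto.
 set (m := mm psi n) in *.
 set (E := 2 * (psi (INR n) / INR m) + 2 * (psi (INR n) - psi (INR n + 1))).
 assert (Hs2 : 0 < sin (t / 2) ^ 2) by (apply pow2_gt_0 || (simpl; rewrite Rmult_1_r; apply Rsqr_pos_lt); auto).
 set (Ga := / (4 * sin (t / 2) ^ 2)).
 assert (HGa : 0 < Ga) by (unfold Ga; apply Rinv_0_lt_compat; lra).
 set (k0 := INR n - INR m - 1).
 set (th := beta * PI / 2).
 set (G := fun j : nat => - cos ((k0 + INR j - 1) * t - th) / (4 * sin (t / 2) ^ 2)).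
 assert (HGb : forall j, Rabs (G j) <= Ga).
 { intros j. unfold G, Ga. unfold Rdiv. rewrite Rabs_mult, Rabs_Ropp, (Rabs_pos_eq (/ _)) by (left; apply Rinv_0_lt_compat; lra).
   pose proof (COS_bound ((k0 + INR j - 1) * t - th)).
   assert (Rabs (cos ((k0 + INR j - 1) * t - th)) <= 1) by (apply Rabs_le; lra).
   rewrite <- (Rmult_1_l (/ _)) at 2. apply Rmult_le_compat_r; [left; apply Rinv_0_lt_compat; lra| lra]. }
 assert (HX : forall j, cos ((k0 + INR j) * t - th) = G (S (S j)) - 2 * G (S j) + G j).
 { intros j. unfold G. rewrite (cos_id ((k0 + INR j) * t - th) t Hs). rewrite !S_INR.
   replace ((k0 + INR j) * t - th + t) with ((k0 + (INR j + 1 + 1) - 1) * t - th) by ring.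
   replace ((k0 + INR j) * t - th - t) with ((k0 + INR j - 1) * t - th) by ring.
   replace (k0 + (INR j + 1) - 1) with (k0 + INR j) by ring. reflexivity. }
 set (p := fun i => psi (INR (n + i))).
 set (S0 := psi (INR n) * (1 + 2 * b * (eta psi (INR n) - INR n) / (b - 1))).
 assert (Hp : forall i, Rabs (tail_term psi beta n t i) <= p i) by (intros; apply tail_abs; auto).
 assert (HS : forall T, sm p T <= S0) by (intros; apply tail_sum_bound; auto).
 replace (E / (4 * sin (t / 2) ^ 2)) with (Ga * E) by (unfold Ga, Rdiv; ring).
 apply (lim_le_const (fun k => psi (INR n) * Fsum psi beta n t + sum_f_R0 (tail_term psi beta n t) (S k))
         _ (Ga * E) (fun k => 4 * Ga * psi (INR (n + k)))).
 - intros eps He. destruct (series_value_spec _ p S0 Hp HS eps He) as [N HN]. exists N. intros k Hk.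
   unfold Rdist. replace (psi (INR n) * Fsum psi beta n t + sum_f_R0 (tail_term psi beta n t) (S k) -
     (psi (INR n) * Fsum psi beta n t + series_value (tail_term psi beta n t))) with
     (sum_f_R0 (tail_term psi beta n t) (S k) - series_value (tail_term psi beta n t)) by ring.
   apply HN. lia.
 - apply cv_scal. apply psi_to0; auto.
 - intros k. rewrite sm_sum_f, <- psum_eq by auto. fold m.
   replace (S m + S (S k))%nat with (S (S (S m + k))) by lia.
   rewrite (sm_ext _ (fun j => cf psi n j * (G (S (S j)) - 2 * G (S j) + G j))).
   2: { intros i _. rewrite <- HX. unfold k0, th. reflexivity. }
   rewrite abel_id.
   rewrite (cf_ramp psi n 0), (cf_ramp psi n 1) by (fold m; lia). simpl INR.
   rewrite (cf_tail psi n (S m + k)), (cf_tail psi n (S (S m + k))) by (fold m; lia). fold m.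
   replace (S m + k - S m)%nat with k by lia. replace (S (S m + k) - S m)%nat with (S k) by lia.
   assert (Hk : 1 <= INR (n + k)) by (rewrite plus_INR; pose proof (pos_INR k); lra).
   assert (H1 : 0 < psi (INR (n + S k))) by (apply psi_pos; auto; rewrite plus_INR; pose proof (pos_INR (S k)); lra).
   assert (H2 : psi (INR (n + S k)) <= psi (INR (n + k))) by (apply psi_decr_le; auto; apply le_INR; lia).
   assert (HA : Rabs (sm (fun i => (cf psi n i - 2 * cf psi n (S i) + cf psi n (S (S i))) * G (S (S i))) (S m + k)) <= Ga * E).
   { eapply Rle_trans. apply sm_abs.
     apply Rle_trans with (sm (fun i => Ga * Rabs (cf psi n i - 2 * cf psi n (S i) + cf psi n (S (S i)))) (S m + k)).
     - apply sm_le. intros i _. rewrite Rabs_mult, Rmult_comm. apply Rmult_le_compat_r. apply Rabs_pos. auto.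
     - rewrite sm_scal. apply Rmult_le_compat_l. lra. apply e_sum_bound; auto. }
   set (A1 := sm _ (S m + k)) in *.
   set (g1 := G (S (S (S m + k)))). set (g2 := G (S (S (S (S m + k))))). set (g0 := G O). set (g1' := G 1%nat).
   assert (Rabs g1 <= Ga) by apply HGb. assert (Rabs g2 <= Ga) by apply HGb.
   set (a := psi (INR (n + k))) in *. set (c := psi (INR (n + S k))) in *.
   assert (Rabs ((a - c) * g1) <= 2 * Ga * a).
   { rewrite Rabs_mult. rewrite Rabs_pos_eq by lra. nra. }
   assert (Rabs (c * (g2 - g1)) <= 2 * Ga * a).
   { rewrite Rabs_mult. rewrite Rabs_pos_eq by lra. pose proof (Rabs_triang g2 (- g1)) as Ht. rewrite Rabs_Ropp in Ht.
     replace (g2 - g1) with (g2 + - g1) by ring. nra. }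
   replace (A1 + (a - c) * g1 + c * (g2 - g1) + psi (INR n) / INR m * 0 * g0 +
     (psi (INR n) / INR m * 0 - 2 * (psi (INR n) / INR m * 0)) * g1')
     with (A1 + ((a - c) * g1 + c * (g2 - g1))) by ring.
   eapply Rle_trans. apply Rabs_triang. eapply Rle_trans. apply Rplus_le_compat_l. apply Rabs_triang. lra.
Qed.

Lemma PI_bounds : 3.135 <= PI <= 3.1421.
Proof.
 destruct (PI_2_3_7_ineq 1) as [_ H1]. destruct (PI_2_3_7_ineq 0) as [H2 _].
 unfold tg_alt, PI_2_3_7_tg, Ratan_seq in *. simpl in *. split; lra.
Qed.

Lemma sin_lin x : 0 <= x <= PI / 2 -> 63 / 100 * x <= sin x.
Proof.
 intros Hx. pose proof PI_bounds as HPI.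
 destruct (SIN x ltac:(lra) ltac:(lra)) as [H _].
 assert (E : sin_lb x = (-1)^0 * (x^1 / INR (fact 1)) + (-1)^1 * (x^3 / INR (fact 3)) +
    (-1)^2 * (x^5 / INR (fact 5)) + (-1)^3 * (x^7 / INR (fact 7))) by reflexivity.
 assert (F1 : INR (fact 1) = 1) by reflexivity.
 assert (F3 : INR (fact 3) = 6) by (rewrite INR_IZR_INZ; reflexivity).
 assert (F5 : INR (fact 5) = 120) by (rewrite INR_IZR_INZ; reflexivity).
 assert (F7 : INR (fact 7) = 5040) by (rewrite INR_IZR_INZ; reflexivity).
 rewrite E, F1, F3, F5, F7 in H. simpl pow in H.
 set (y := x * x).
 assert (Hy : 0 <= y <= 2.47) by (unfold y; split; nra).
 assert (Hp : 0 <= 37/100 - y / 6 + y * y / 120 - y * y * y / 5040).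
 { assert (0 <= (2.47 - y) * y) by nra. assert (0 <= (2.47 - y) * y * y) by nra. nra. }
 assert (0 <= x * (37/100 - y / 6 + y * y / 120 - y * y * y / 5040)) by nra.
 unfold y in *. nra.
Qed.

Lemma s_bound psi n a : 1 < a -> a <= eta psi (INR n) - INR n -> 1 <= INR n -> in_M psi ->
  psi (INR n) / INR (mm psi n) <= a / (a - 1) * (psi (INR n) / (eta psi (INR n) - INR n)).
Proof.
 intros Ha Hah Hn HM. destruct (mm_props psi n ltac:(lra)) as [Hm1 [_ [_ [Hm2 Hm3]]]].
 set (h := eta psi (INR n) - INR n) in *. set (m := INR (mm psi n)) in *.
 assert (Hm : 0 < m) by (unfold m; apply lt_0_INR; lia).
 pose proof (psi_pos psi HM _ Hn) as HP.
 assert (0 <= a * (m - (h - 1))) by (apply Rmult_le_pos; lra).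
 assert (Hk : h * (a - 1) <= a * m) by (ring_simplify; ring_simplify in H; lra).
 replace (a / (a - 1) * (psi (INR n) / h)) with (psi (INR n) * a / ((a - 1) * h)) by (field; lra).
 apply Rmult_le_reg_r with (m * ((a - 1) * h)). apply Rmult_lt_0_compat; [lra | apply Rmult_lt_0_compat; lra].
 replace (psi (INR n) / m * (m * ((a - 1) * h))) with (psi (INR n) * ((a - 1) * h)) by (field; lra).
 replace (psi (INR n) * a / ((a - 1) * h) * (m * ((a - 1) * h))) with (psi (INR n) * (a * m)) by (field; lra).
 apply Rmult_le_compat_l; lra.
Qed.

Lemma E_bound psi n a b : in_M psi -> hyps_mu psi -> 1 <= INR n -> 2 < b ->
  b * (eta psi (INR n) - INR n) <= INR n -> 1 < a -> a <= eta psi (INR n) - INR n ->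
  2 * (psi (INR n) / INR (mm psi n)) + 2 * (psi (INR n) - psi (INR n + 1)) <=
  2 * (a / (a - 1) + (b + 1) / b) * (psi (INR n) / (eta psi (INR n) - INR n)).
Proof.
 intros HM Hmu Hn Hb Hbh Ha Hah.
 pose proof (s_bound psi n a Ha Hah Hn HM).
 pose proof (D_bound psi n b HM Hmu Hn Hb Hbh ltac:(lra)).
 replace (psi (INR n) * (b + 1) / (b * (eta psi (INR n) - INR n))) with
   ((b + 1) / b * (psi (INR n) / (eta psi (INR n) - INR n))) in H0 by (field; lra). lra.
Qed.

Lemma sin_sq_lb t : 0 < Rabs t <= PI -> 3969 / 40000 * t ^ 2 <= sin (t / 2) ^ 2.
Proof.
 intros Ht. assert (Hx : 0 <= Rabs t / 2 <= PI / 2) by lra.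
 pose proof (sin_lin _ Hx).
 assert (sin (t / 2) ^ 2 = sin (Rabs t / 2) ^ 2).
 { destruct (Rle_dec 0 t). rewrite Rabs_pos_eq; auto.
   rewrite Rabs_left by lra. replace (- t / 2) with (- (t / 2)) by field. rewrite sin_neg. ring. }
 rewrite H0. replace (t ^ 2) with (Rabs t ^ 2) by (rewrite RPow_abs, Rabs_pos_eq; auto; apply pow2_ge_0).
 nra.
Qed.

Lemma ii_raw psi beta n b t : in_M psi -> hyps_mu psi -> 1 <= INR n -> 2 < b ->
  b * (eta psi (INR n) - INR n) <= INR n -> 1 < eta psi (INR n) - INR n ->
  Rabs (PsiStar psi beta n t) <= psi (INR n) * (INR (mm psi n) - 1) / 2 +
      psi (INR n) * (1 + 2 * b * (eta psi (INR n) - INR n) / (b - 1)).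
Proof.
 intros HM Hmu Hn Hb Hbh Hh. destruct (mm_props psi n Hh) as [Hm1 _].
 rewrite PsiStar_eq by auto. eapply Rle_trans. apply Rabs_triang.
 pose proof (psi_pos psi HM _ Hn) as HP.
 apply Rplus_le_compat.
 - rewrite Rabs_mult, Rabs_pos_eq by lra. unfold Rdiv at 1. rewrite Rmult_assoc. apply Rmult_le_compat_l; [lra|].
   unfold Fsum. eapply Rle_trans. apply sm_abs.
   assert (Hm : 0 < INR (mm psi n)) by (apply lt_0_INR; lia).
   apply Rle_trans with (sm (fun i => (INR i + 1) / INR (mm psi n)) (mm psi n - 1)).
   + apply sm_le. intros i _. rewrite Rabs_mult.
     assert (0 <= (INR i + 1) / INR (mm psi n)) by (apply Rmult_le_pos; [pose proof (pos_INR i); lra| left; apply Rinv_0_lt_compat; lra]).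
     rewrite (Rabs_pos_eq ((INR i + 1) / _)) by auto.
     pose proof (COS_bound ((INR n - INR (mm psi n) + 1 + INR i) * t - beta * PI / 2)).
     assert (Rabs (cos ((INR n - INR (mm psi n) + 1 + INR i) * t - beta * PI / 2)) <= 1) by (apply Rabs_le; lra). nra.
   + unfold Rdiv. rewrite (sm_ext _ (fun i => / INR (mm psi n) * (INR i + 1))) by (intros; ring).
     rewrite sm_scal, sum_lin, minus_INR by lia. simpl (INR 1). right. field. lra.
 - apply (series_value_bound _ (fun i => psi (INR (n + i)))). intros; apply tail_abs; auto.
   intros; apply tail_sum_bound; auto.
Qed.

Lemma ii_final psi beta n a b t : in_M psi -> hyps_mu psi -> 1 <= INR n -> 2 < b ->
  b * (eta psi (INR n) - INR n) <= INR n -> 1 < a -> a <= eta psi (INR n) - INR n ->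
  Rabs (PsiStar psi beta n t) <= (2 * b / (b - 2) + 1 / a + 1 / 2) * psi (INR n) * (eta psi (INR n) - INR n).
Proof.
 intros HM Hmu Hn Hb Hbh Ha Hah.
 pose proof (ii_raw psi beta n b t HM Hmu Hn Hb Hbh ltac:(lra)) as H.
 destruct (mm_props psi n ltac:(lra)) as [_ [_ [_ [Hm2 _]]]].
 eapply Rle_trans. apply H. pose proof (psi_pos psi HM _ Hn) as HP.
 set (h := eta psi (INR n) - INR n) in *. set (P := psi (INR n)) in *.
 assert (H1 : 1 <= h / a) by (apply Rmult_le_reg_r with a; [lra| unfold Rdiv; rewrite Rmult_assoc, Rinv_l; lra]).
 assert (H2 : 2 * b * h / (b - 1) <= 2 * b / (b - 2) * h).
 { apply Rmult_le_reg_r with ((b - 1) * (b - 2)). nra.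
   replace (2 * b * h / (b - 1) * ((b - 1) * (b - 2))) with (2 * b * h * (b - 2)) by (field; lra).
   replace (2 * b / (b - 2) * h * ((b - 1) * (b - 2))) with (2 * b * h * (b - 1)) by (field; lra). nra. }
 replace ((2 * b / (b - 2) + 1 / a + 1 / 2) * P * h) with (P * (2 * b / (b - 2) * h + h / a + h / 2)) by (field; lra).
 replace (P * (INR (mm psi n) - 1) / 2 + P * (1 + 2 * b * h / (b - 1))) with
   (P * ((INR (mm psi n) - 1) / 2 + 1 + 2 * b * h / (b - 1))) by (field; lra).
 apply Rmult_le_compat_l; lra.
Qed.

Lemma i_final psi beta n a b t : in_M psi -> hyps_mu psi -> 1 <= INR n -> 2 < b ->
  b * (eta psi (INR n) - INR n) <= INR n -> 1 < a -> a <= eta psi (INR n) - INR n ->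
  0 < Rabs t <= PI ->
  Rabs (PsiStar psi beta n t) <=
    PI ^ 2 * (2 * (b + 1) ^ 2 / b ^ 2 + a / (a - 1))
    * (psi (INR n) / (eta psi (INR n) - INR n)) * (1 / t ^ 2).
Proof.
 intros HM Hmu Hn Hb Hbh Ha Hah Ht.
 pose proof (sin_sq_lb t Ht) as Hs.
 assert (Ht0 : t <> 0) by (intro; subst; rewrite Rabs_R0 in Ht; lra).
 assert (Ht2 : 0 < t ^ 2) by (replace (t ^ 2) with (Rsqr t) by (unfold Rsqr; ring); apply Rsqr_pos_lt; auto).
 assert (Hsn : sin (t / 2) <> 0). { intro Hz. rewrite Hz in Hs. simpl in Hs. nra. }
 pose proof (abel_bound psi beta n b t HM Hmu Hn Hb Hbh ltac:(lra) Hsn) as HA.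
 pose proof (E_bound psi n a b HM Hmu Hn Hb Hbh Ha Hah) as HE.
 pose proof (psi_pos psi HM _ Hn) as HP. pose proof PI_bounds as HPI.
 set (E := 2 * (psi (INR n) / INR (mm psi n)) + 2 * (psi (INR n) - psi (INR n + 1))) in *.
 set (Q := psi (INR n) / (eta psi (INR n) - INR n)) in *.
 assert (HQ : 0 < Q) by (unfold Q; apply Rmult_lt_0_compat; [lra| apply Rinv_0_lt_compat; lra]).
 set (A := a / (a - 1)) in *. set (B := (b + 1) / b) in *.
 assert (HA1 : 1 <= A) by (unfold A; apply Rmult_le_reg_r with (a - 1); [lra| unfold Rdiv; rewrite Rmult_assoc, Rinv_l; lra]).
 assert (HB1 : 1 <= B) by (unfold B; apply Rmult_le_reg_r with b; [lra| unfold Rdiv; rewrite Rmult_assoc, Rinv_l; lra]).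
 replace (2 * (b + 1) ^ 2 / b ^ 2) with (2 * B ^ 2) by (unfold B; field; lra).
 clearbody A B.
 assert (HE0 : 0 <= E).
 { unfold E. assert (psi (INR n + 1) <= psi (INR n)) by (apply psi_decr_le; auto; lra).
   assert (0 <= psi (INR n) / INR (mm psi n)). { destruct (mm_props psi n ltac:(lra)) as [Hm1 _].
     apply Rmult_le_pos; [lra| left; apply Rinv_0_lt_compat; apply lt_0_INR; lia]. } lra. }
 eapply Rle_trans. apply HA.
 set (S2 := sin (t / 2) ^ 2) in *.
 apply Rmult_le_reg_r with (4 * S2 * t ^ 2). nra.
 replace (E / (4 * S2) * (4 * S2 * t ^ 2)) with (E * t ^ 2) by (field; nra).
 replace (PI ^ 2 * (2 * B ^ 2 + A) * Q * (1 / t ^ 2) * (4 * S2 * t ^ 2)) with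
   (PI ^ 2 * (2 * B ^ 2 + A) * Q * (4 * S2)) by (field; nra).
 assert (E <= 2 * (A + B) * Q) by lra.
 assert (E * t ^ 2 <= 2 * (A + B) * Q * t ^ 2) by nra.
 assert (HPI2 : 9.8 <= PI ^ 2) by (simpl; nra).
 assert (4 * 3969 / 40000 * t ^ 2 <= 4 * S2) by lra.
 assert (B <= B ^ 2) by (simpl; nra).
 assert (2 * (A + B) <= 9.8 * (2 * B ^ 2 + A) * (4 * 3969 / 40000)) by (clear - HA1 HB1 H2; lra).
 assert (0 <= (2 * B ^ 2 + A) * Q) by nra.
 assert (HQt : 0 <= Q * t ^ 2) by nra.
 assert (2 * (A + B) * Q * t ^ 2 <= 9.8 * (2 * B ^ 2 + A) * Q * (4 * 3969 / 40000 * t ^ 2)).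
 { replace (2 * (A + B) * Q * t ^ 2) with (2 * (A + B) * (Q * t ^ 2)) by ring.
   replace (9.8 * (2 * B ^ 2 + A) * Q * (4 * 3969 / 40000 * t ^ 2)) with
     (9.8 * (2 * B ^ 2 + A) * (4 * 3969 / 40000) * (Q * t ^ 2)) by ring.
   apply Rmult_le_compat_r; lra. }
 assert (9.8 * (2 * B ^ 2 + A) * Q * (4 * 3969 / 40000 * t ^ 2) <= PI ^ 2 * (2 * B ^ 2 + A) * Q * (4 * S2)).
 { apply Rmult_le_compat; try nra. }
 lra.
Qed.

Lemma exp_le_mono x y : x <= y -> exp x <= exp y.
Proof. intros [H|H]. left; apply exp_increasing; auto. subst; lra. Qed.

Lemma rpow_small r q : 0 < r <= 1 -> 1 <= q -> Rpower r q <= r.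
Proof.
 intros Hr Hq. unfold Rpower. rewrite <- (exp_ln r) at 2 by lra. apply exp_le_mono.
 assert (ln r <= 0). { destruct (Req_dec r 1). subst; rewrite ln_1; lra.
   rewrite <- ln_1. left; apply ln_increasing; lra. } nra.
Qed.

Lemma rpow_nonneg y q : 0 <= rpow y q.
Proof. unfold rpow. destruct (Rle_dec y 0). lra. unfold Rpower. left; apply exp_pos. Qed.

Lemma rpow_major y X z q : 0 <= y -> 0 < X -> y <= X -> y <= X * z -> 1 <= q ->
  rpow y q <= Rpower X q * z.
Proof.
 intros Hy HX Hyx Hyz Hq. unfold rpow. destruct (Rle_dec y 0).
 - assert (0 <= z) by (assert (y = 0) by lra; subst; nra).
   apply Rmult_le_pos; auto. unfold Rpower; left; apply exp_pos.
 - replace y with (X * (y / X)) at 1 by (field; lra).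
   rewrite <- Rpower_mult_distr by (try apply Rmult_lt_0_compat; try lra; apply Rinv_0_lt_compat; lra).
   assert (Hr : 0 < y / X <= 1). { split. apply Rmult_lt_0_compat; [lra| apply Rinv_0_lt_compat; lra].
     apply Rmult_le_reg_r with X; auto. unfold Rdiv; rewrite Rmult_assoc, Rinv_l; lra. }
   pose proof (rpow_small _ _ Hr Hq).
   assert (y / X <= z). { apply Rmult_le_reg_r with X; auto. unfold Rdiv; rewrite Rmult_assoc, Rinv_l; lra. }
   apply Rmult_le_compat_l. unfold Rpower; left; apply exp_pos. lra.
Qed.

Lemma rpow_mono x y p : 0 <= p -> x <= y -> rpow x p <= rpow y p.
Proof.
 intros Hp Hxy. unfold rpow at 1. destruct (Rle_dec x 0). apply rpow_nonneg.
 unfold rpow. destruct (Rle_dec y 0). lra. apply Rle_Rpower_l; lra.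
Qed.

Lemma rpow_cont q : 1 <= q -> forall y0, continuity_pt (fun y => rpow y q) y0.
Proof.
 intros Hq y0. destruct (Rtotal_order y0 0) as [Hneg|[H0|Hpos]].
 - apply (continuity_pt_locally_ext (fun _ => 0) _ (- y0)). lra.
   intros y Hy. unfold Rdist in Hy. unfold rpow. destruct (Rle_dec y 0); auto.
   exfalso. unfold Rabs in Hy; destruct (Rcase_abs (y - y0)); lra.
   apply continuity_pt_const. intros ? ?; auto.
 - subst. intros eps He. exists (Rmin 1 eps). split. apply Rmin_pos; lra.
   intros y [_ Hy]. simpl in *. unfold Rdist in *. rewrite Rminus_0_r in Hy.
   unfold rpow at 2. destruct (Rle_dec 0 0) as [_|n]; [|lra]. rewrite Rminus_0_r.
   unfold rpow. destruct (Rle_dec y 0). rewrite Rabs_R0; lra.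
   assert (Hy1 : y < 1) by (pose proof (Rmin_l 1 eps); pose proof (Rle_abs y); lra).
   assert (Hy2 : y < eps) by (pose proof (Rmin_r 1 eps); pose proof (Rle_abs y); lra).
   pose proof (rpow_small y q ltac:(lra) Hq). rewrite Rabs_pos_eq. lra. unfold Rpower; left; apply exp_pos.
 - apply (continuity_pt_locally_ext (fun y => exp (q * ln y)) _ (y0 / 2)). lra.
   intros y Hy. unfold Rdist in Hy. unfold rpow. destruct (Rle_dec y 0).
   exfalso. unfold Rabs in Hy; destruct (Rcase_abs (y - y0)); lra. reflexivity.
   apply (continuity_pt_comp (fun y => q * ln y) exp).
   apply continuity_pt_mult. apply continuity_pt_const; intros ? ?; auto.
   apply derivable_continuous_pt. exists (/ y0). apply derivable_pt_lim_ln; auto.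
   apply derivable_continuous_pt. apply derivable_pt_exp.
Qed.

Lemma fold_cont (l : list nat) (g : nat -> R -> R) x :
  (forall i, continuity_pt (g i) x) ->
  continuity_pt (fun t => fold_right Rplus 0 (map (fun i => g i t) l)) x.
Proof.
 intros Hg. induction l; simpl. apply continuity_pt_const; intros ? ?; auto.
 apply continuity_pt_plus; auto.
Qed.

Lemma PsiStar_cont psi beta n b x : in_M psi -> hyps_mu psi -> 1 <= INR n -> 2 < b ->
  b * (eta psi (INR n) - INR n) <= INR n ->
  continuity_pt (PsiStar psi beta n) x.
Proof.
 intros HM Hmu Hn Hb Hbh. unfold PsiStar.
 apply continuity_pt_plus.
 - apply continuity_pt_mult. apply continuity_pt_const; intros ? ?; auto.
   unfold sumZ. apply fold_cont. intros i. reg.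
 - apply (series_cont (fun t => tail_term psi beta n t) (fun i => psi (INR (n + i)))
     (psi (INR n) * (1 + 2 * b * (eta psi (INR n) - INR n) / (b - 1)))).
   intros; apply tail_abs; auto. intros; apply tail_sum_bound; auto.
   intros i y. unfold tail_term. reg.
Qed.

Lemma arith_maj X x y : 0 < X -> 0 < x -> y <= X -> y <= X * (20000 / 3969) / x ^ 2 ->
  y <= X * (169 / 16) / (1 + x) ^ 2.
Proof.
 intros HX Hx H1 H2. assert (Hx2 : 0 < x ^ 2) by (apply pow_lt; lra).
 assert (H1x : 0 < (1 + x) ^ 2) by (apply pow_lt; lra).
 apply Rmult_le_reg_r with ((1 + x) ^ 2); auto.
 replace (X * (169 / 16) / (1 + x) ^ 2 * (1 + x) ^ 2) with (X * (169 / 16)) by (field; lra).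
 destruct (Rle_dec x (9 / 4)).
 - assert ((1 + x) ^ 2 <= 169 / 16) by (simpl; nra).
   destruct (Rle_dec 0 y). nra. nra.
 - assert (y * x ^ 2 <= X * (20000 / 3969)).
   { apply Rmult_le_compat_r with (r := x ^ 2) in H2; [|lra].
     replace (X * (20000 / 3969) / x ^ 2 * x ^ 2) with (X * (20000 / 3969)) in H2 by (field; lra). auto. }
   assert (20000 / 3969 * (1 + x) ^ 2 <= 169 / 16 * x ^ 2) by (simpl; nra).
   destruct (Rle_dec 0 y).
   + assert (y * (1 + x) ^ 2 * (20000 / 3969) <= y * (169/16) * x ^ 2) by nra.
     assert (y * (1 + x) ^ 2 * (20000 / 3969) <= X * (169/16) * (20000 / 3969)) by nra. nra.
   + nra.
Qed.

Definition Wf (h t : R) := 1 / (1 + h * t) ^ 2 + 1 / (1 + h * (2 * PI - t)) ^ 2.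

Lemma iii_point psi beta n a b t : in_M psi -> hyps_mu psi -> 1 <= INR n -> 2 < b ->
  b * (eta psi (INR n) - INR n) <= INR n -> 1 < a -> a <= eta psi (INR n) - INR n ->
  0 <= t <= 2 * PI ->
  let X := (2 * b / (b - 2) + a / (a - 1)) * psi (INR n) * (eta psi (INR n) - INR n) in
  Rabs (PsiStar psi beta n t) <= X /\
  Rabs (PsiStar psi beta n t) <= X * (169 / 16 * Wf (eta psi (INR n) - INR n) t).
Proof.
 intros HM Hmu Hn Hb Hbh Ha Hah Ht X.
 pose proof (psi_pos psi HM _ Hn) as HP. pose proof PI_bounds as HPI.
 set (h := eta psi (INR n) - INR n) in *.
 assert (Hh : 0 < h) by lra.
 assert (HA1 : 1 / a + 1 / 2 <= a / (a - 1)).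
 { apply Rmult_le_reg_r with (2 * a * (a - 1)). nra.
   replace ((1 / a + 1 / 2) * (2 * a * (a - 1))) with ((2 + a) * (a - 1)) by (field; lra).
   replace (a / (a - 1) * (2 * a * (a - 1))) with (2 * a * a) by (field; lra). nra. }
 assert (HX1 : Rabs (PsiStar psi beta n t) <= X).
 { eapply Rle_trans. apply ii_final; eauto. unfold X. fold h.
   apply Rmult_le_compat_r; [lra|]. apply Rmult_le_compat_r; lra. }
 assert (HC0 : 0 < 2 * b / (b - 2)) by (apply Rmult_lt_0_compat; [lra| apply Rinv_0_lt_compat; lra]).
 assert (HA0 : 0 < a / (a - 1)) by (apply Rmult_lt_0_compat; [lra| apply Rinv_0_lt_compat; lra]).
 assert (HX : 0 < X) by (unfold X; apply Rmult_lt_0_compat; [apply Rmult_lt_0_compat; lra| lra]).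
 split; auto.
 assert (HW1 : 0 <= 1 / (1 + h * t) ^ 2) by (unfold Rdiv; rewrite Rmult_1_l; left; apply Rinv_0_lt_compat; apply pow_lt; nra).
 assert (HW2 : 0 <= 1 / (1 + h * (2 * PI - t)) ^ 2) by (unfold Rdiv; rewrite Rmult_1_l; left; apply Rinv_0_lt_compat; apply pow_lt; nra).
 assert (Hend : t = 0 \/ t = 2 * PI -> 1 <= Wf h t).
 { intros [Ht0|Ht0]; subst; unfold Wf.
   - replace (1 + h * 0) with 1 by ring. rewrite pow1. lra.
   - replace (1 + h * (2 * PI - 2 * PI)) with 1 by ring. rewrite pow1. lra. }
 destruct (Rle_dec t 0) as [Ht0|Ht0].
 { assert (1 <= Wf h t) by (apply Hend; lra).
   assert (X <= X * (169 / 16 * Wf h t)) by (rewrite <- (Rmult_1_r X) at 1; apply Rmult_le_compat_l; lra). lra. }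
 destruct (Rle_dec (2 * PI) t) as [Ht1|Ht1].
 { assert (1 <= Wf h t) by (apply Hend; lra).
   assert (X <= X * (169 / 16 * Wf h t)) by (rewrite <- (Rmult_1_r X) at 1; apply Rmult_le_compat_l; lra). lra. }
 set (u := if Rle_dec t PI then t else 2 * PI - t).
 assert (Hu : 0 < Rabs u <= PI /\ sin (t / 2) ^ 2 = sin (u / 2) ^ 2 /\ 1 / (1 + h * u) ^ 2 <= Wf h t).
 { unfold u, Wf. destruct (Rle_dec t PI).
   - rewrite Rabs_pos_eq by lra. repeat split; try lra.
   - rewrite Rabs_pos_eq by lra. repeat split; try lra.
     replace (t / 2) with (PI - (2 * PI - t) / 2) by field. rewrite sin_PI_x. reflexivity. }
 destruct Hu as [Hu1 [Hu2 Hu3]].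
 pose proof (sin_sq_lb u Hu1) as Hs. rewrite <- Hu2 in Hs.
 assert (Hu0 : 0 < u) by (unfold u in *; destruct (Rle_dec t PI); lra).
 assert (Hu2' : 0 < u ^ 2) by (apply pow_lt; lra).
 assert (Hsn : sin (t / 2) <> 0). { intro Hz. rewrite Hz in Hs. simpl in Hs. nra. }
 pose proof (abel_bound psi beta n b t HM Hmu Hn Hb Hbh ltac:(unfold h in *; lra) Hsn) as HAb.
 pose proof (E_bound psi n a b HM Hmu Hn Hb Hbh Ha Hah) as HE. fold h in HE.
 set (E := 2 * (psi (INR n) / INR (mm psi n)) + 2 * (psi (INR n) - psi (INR n + 1))) in *.
 set (S2 := sin (t / 2) ^ 2) in *.
 assert (HB : (b + 1) / b <= 2 * b / (b - 2)).
 { apply Rmult_le_reg_r with (b * (b - 2)). nra.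
   replace ((b + 1) / b * (b * (b - 2))) with ((b + 1) * (b - 2)) by (field; lra).
   replace (2 * b / (b - 2) * (b * (b - 2))) with (2 * b * b) by (field; lra). nra. }
 set (Q := psi (INR n) / h) in *.
 assert (HQ : 0 < Q) by (unfold Q; apply Rmult_lt_0_compat; [lra| apply Rinv_0_lt_compat; lra]).
 assert (HE2 : E <= 2 * (2 * b / (b - 2) + a / (a - 1)) * Q) by nra.
 assert (HK : Rabs (PsiStar psi beta n t) <= X * (20000 / 3969) / (h * u) ^ 2).
 { eapply Rle_trans. apply HAb.
   replace (X * (20000 / 3969) / (h * u) ^ 2) with ((2 * (2 * b / (b - 2) + a / (a - 1)) * Q) / (4 * (3969 / 40000 * u ^ 2)))
     by (unfold X, Q; field; lra).
   assert (HE0 : 0 <= E).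
   { unfold E. assert (psi (INR n + 1) <= psi (INR n)) by (apply psi_decr_le; auto; lra).
     assert (0 <= psi (INR n) / INR (mm psi n)). { destruct (mm_props psi n ltac:(unfold h in *; lra)) as [Hm1 _].
       apply Rmult_le_pos; [lra| left; apply Rinv_0_lt_compat; apply lt_0_INR; lia]. } lra. }
   unfold Rdiv. apply Rmult_le_compat; auto. left; apply Rinv_0_lt_compat; lra.
   apply Rinv_le_contravar; lra. }
 assert (Hhu : 0 < h * u) by nra.
 pose proof (arith_maj X (h * u) _ HX Hhu HX1 HK) as Hm.
 eapply Rle_trans. apply Hm.
 replace (X * (169 / 16) / (1 + h * u) ^ 2) with (X * (169 / 16 * (1 / (1 + h * u) ^ 2))) by (field; nra).
 apply Rmult_le_compat_l; lra.
Qed.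

From Coquelicot Require Import Coquelicot.
Open Scope R_scope.

Lemma W_int (h K : R) : 0 < h -> 0 <= K ->
  forall pr : Riemann_integrable (fun t => K * (169 / 16 * Wf h t)) 0 (2 * PI),
  RiemannInt pr <= K * (169 / 16) * (2 / h).
Proof.
 intros Hh HK pr. pose proof PI_RGT_0.
 rewrite <- RInt_Reals.
 set (F := fun t => K * (169 / 16) * (- / (h * (1 + h * t)) + / (h * (1 + h * (2 * PI - t))))).
 assert (HI : is_RInt (fun t => K * (169 / 16 * Wf h t)) 0 (2 * PI) (minus (F (2 * PI)) (F 0))).
 { apply (is_RInt_derive F).
   - intros x Hx. rewrite Rmin_left in Hx by lra. rewrite Rmax_right in Hx by lra.
     unfold F, Wf. auto_derive.
     + assert (0 < h * (1 + h * x)) by nra. assert (0 < h * (1 + h * (2 * PI + - x))) by nra.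
       split; [|split; [|exact I]]; apply Rgt_not_eq; lra.
     + assert (0 < 1 + h * x) by nra. assert (0 < 1 + h * (2 * PI + - x)) by nra.
       replace (2 * PI - x) with (2 * PI + - x) by ring. field. split; lra.
   - intros x Hx. rewrite Rmin_left in Hx by lra. rewrite Rmax_right in Hx by lra.
     apply continuity_pt_filterlim. unfold Wf. reg; apply pow_nonzero; apply Rgt_not_eq; nra. }
 rewrite (is_RInt_unique _ _ _ _ HI). unfold F, minus, plus, opp; simpl.
 replace (2 * PI - 2 * PI) with 0 by ring. replace (2 * PI - 0) with (2 * PI) by ring.
 assert (0 < 1 + h * (2 * PI)) by nra.
 assert (0 <= / (h * (1 + h * (2 * PI)))) by (left; apply Rinv_0_lt_compat; nra).
 replace (K * (169 / 16) * (- / (h * (1 + h * (2 * PI))) + / (h * (1 + h * 0))) +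
   - (K * (169 / 16) * (- / (h * (1 + h * 0)) + / (h * (1 + h * (2 * PI))))))
   with (K * (169 / 16) * (2 / h) - K * (169/16) * 2 * / (h * (1 + h * (2 * PI)))) by (field; split; nra).
 assert (0 <= K * (169/16) * 2 * / (h * (1 + h * (2 * PI)))) by (apply Rmult_le_pos; nra).
 lra.
Qed.

Lemma iii_final psi beta n a b q : in_M psi -> hyps_mu psi -> 1 <= INR n -> 2 < b ->
  b * (eta psi (INR n) - INR n) <= INR n -> 1 < a -> a <= eta psi (INR n) - INR n -> 1 <= q ->
  exists pr : Riemann_integrable (fun t => rpow (Rabs (PsiStar psi beta n t)) q) 0 (2 * PI),
    rpow (RiemannInt pr) (1 / q) <=
      2 * (1 + PI ^ 2) * (2 * b / (b - 2) + a / (a - 1)) * psi (INR n)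
      * Rpower (eta psi (INR n) - INR n) (1 - 1 / q).
Proof.
 intros HM Hmu Hn Hb Hbh Ha Hah Hq.
 pose proof PI_RGT_0 as HPI0. pose proof PI_bounds as HPI.
 assert (H2P : 0 <= 2 * PI) by lra.
 assert (pr : Riemann_integrable (fun t => rpow (Rabs (PsiStar psi beta n t)) q) 0 (2 * PI)).
 { apply continuity_implies_RiemannInt; auto. intros x _.
   apply (continuity_pt_comp (fun t => Rabs (PsiStar psi beta n t)) (fun y => rpow y q)).
   apply (continuity_pt_comp (PsiStar psi beta n) Rabs). eapply PsiStar_cont; eauto.
   apply Rcontinuity_abs. apply rpow_cont; auto. }
 exists pr.
 set (h := eta psi (INR n) - INR n) in *.
 assert (Hh : 0 < h) by lra.
 set (C := 2 * b / (b - 2) + a / (a - 1)).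
 assert (HC0 : 0 < 2 * b / (b - 2)) by (apply Rmult_lt_0_compat; [lra| apply Rinv_0_lt_compat; lra]).
 assert (HA0 : 0 < a / (a - 1)) by (apply Rmult_lt_0_compat; [lra| apply Rinv_0_lt_compat; lra]).
 pose proof (psi_pos psi HM _ Hn) as HP.
 set (X := C * psi (INR n) * h).
 assert (HX : 0 < X) by (unfold X, C; apply Rmult_lt_0_compat; [apply Rmult_lt_0_compat; lra| lra]).
 set (K := Rpower X q).
 assert (HK : 0 < K) by (unfold K, Rpower; apply exp_pos).
 assert (pr2 : Riemann_integrable (fun t => K * (169 / 16 * Wf h t)) 0 (2 * PI)).
 { apply continuity_implies_RiemannInt; auto. intros x Hx. unfold Wf.
   reg; apply pow_nonzero; apply Rgt_not_eq; nra. }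
 assert (HI : RiemannInt pr <= RiemannInt pr2).
 { apply RiemannInt_P19; auto. intros x Hx.
   destruct (iii_point psi beta n a b x HM Hmu Hn Hb Hbh Ha Hah ltac:(lra)) as [H1 H2].
   apply rpow_major; auto. apply Rabs_pos. }
 pose proof (W_int h K Hh ltac:(lra) pr2) as HW.
 assert (Hq0 : 0 <= 1 / q) by (apply Rmult_le_pos; [lra| left; apply Rinv_0_lt_compat; lra]).
 eapply Rle_trans. apply (rpow_mono (RiemannInt pr) (K * (169 / 16) * (2 / h)) (1 / q) Hq0). lra.
 unfold rpow. destruct (Rle_dec (K * (169 / 16) * (2 / h)) 0) as [Hz|_].
 { exfalso. assert (0 < K * (169 / 16) * (2 / h)) by (apply Rmult_lt_0_compat; [lra| apply Rmult_lt_0_compat; [lra| apply Rinv_0_lt_compat; lra]]). lra. }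
 replace (K * (169 / 16) * (2 / h)) with (K * ((169 / 8) * / h)) by (field; lra).
 assert (Hih : 0 < / h) by (apply Rinv_0_lt_compat; lra).
 rewrite <- Rpower_mult_distr by (try apply Rmult_lt_0_compat; lra).
 rewrite <- Rpower_mult_distr by lra.
 assert (E1 : Rpower K (1 / q) = X).
 { unfold K. rewrite Rpower_mult. replace (q * (1 / q)) with 1 by (field; lra). apply Rpower_1; auto. }
 assert (E2 : Rpower (/ h) (1 / q) = Rpower h (- (1 / q))).
 { unfold Rpower. rewrite ln_Rinv by lra. f_equal. ring. }
 assert (E3 : Rpower (169 / 8) (1 / q) <= 169 / 8).
 { rewrite <- (Rpower_1 (169 / 8)) at 2 by lra. apply Rle_Rpower. lra.
   apply Rmult_le_reg_r with q; [lra|]. unfold Rdiv; rewrite Rmult_1_l, Rinv_l; lra. }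
 rewrite E1, E2.
 assert (E4 : X * Rpower h (- (1 / q)) = C * psi (INR n) * Rpower h (1 - 1 / q)).
 { unfold X. unfold Rminus. rewrite Rpower_plus, Rpower_1 by lra. ring. }
 assert (HR : 0 < Rpower h (- (1 / q))) by (unfold Rpower; apply exp_pos).
 assert (HPI2 : 169 / 8 <= 2 * (1 + PI ^ 2)) by (simpl; nra).
 replace (X * (Rpower (169 / 8) (1 / q) * Rpower h (- (1 / q)))) with
   (Rpower (169 / 8) (1 / q) * (X * Rpower h (- (1 / q)))) by ring.
 rewrite E4. fold C.
 assert (0 <= C * psi (INR n) * Rpower h (1 - 1 / q)).
 { apply Rmult_le_pos. unfold C; nra. unfold Rpower; left; apply exp_pos. }
 assert (0 <= Rpower (169 / 8) (1 / q)) by (unfold Rpower; left; apply exp_pos).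
 replace (2 * (1 + PI ^ 2) * C * psi (INR n) * Rpower h (1 - 1 / q)) with
   (2 * (1 + PI ^ 2) * (C * psi (INR n) * Rpower h (1 - 1 / q))) by ring.
 apply Rmult_le_compat_r; lra.
Qed.

Theorem mainTheorem9 (psi : R -> R) (beta a b : R) (n : nat)
  (Hpsi : in_M_plus_inf psi) (Hn : (1 <= n)%nat)
  (Ha : eta psi (INR n) - INR n >= a) (Ha1 : a > 1)
  (Hb : mu psi (INR n) >= b) (Hb2 : b > 2) :
  (* the defining series converges for every t *)
  (forall t, exists l, infinite_sum (tail_term psi beta n t) l) /\
  (* (i) *)
  (forall t, 0 < Rabs t <= PI ->
     Rabs (PsiStar psi beta n t) <=
       PI ^ 2 * (2 * (b + 1) ^ 2 / b ^ 2 + a / (a - 1))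
       * (psi (INR n) / (eta psi (INR n) - INR n)) * (1 / t ^ 2)) /\
  (* (ii) *)
  (forall t,
     Rabs (PsiStar psi beta n t) <=
       (2 * b / (b - 2) + 1 / a + 1 / 2) * psi (INR n) * (eta psi (INR n) - INR n)) /\
  (* (iii), 1 <= q < ∞ : L^q norm over one period [0, 2π] *)
  (forall q, 1 <= q ->
     exists pr : Riemann_integrable
                   (fun t => rpow (Rabs (PsiStar psi beta n t)) q) 0 (2 * PI),
       rpow (RiemannInt pr) (1 / q) <=
         2 * (1 + PI ^ 2) * (2 * b / (b - 2) + a / (a - 1)) * psi (INR n)
         * Rpower (eta psi (INR n) - INR n) (1 - 1 / q)) /\
  (* (iii), q = ∞ : ess sup of the continuous function over one period *)
  (forall t, 0 <= t <= 2 * PI ->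
     Rabs (PsiStar psi beta n t) <=
       2 * (1 + PI ^ 2) * (2 * b / (b - 2) + a / (a - 1)) * psi (INR n)
       * (eta psi (INR n) - INR n)).
Proof.
 destruct Hpsi as [HM [Hmu _]].
 assert (Hmu' : hyps_mu psi) by exact Hmu.
 assert (HnR : 1 <= INR n) by (rewrite <- INR_1; apply le_INR; auto).
 assert (Hah : a <= eta psi (INR n) - INR n) by lra.
 assert (Hh : 0 < eta psi (INR n) - INR n) by lra.
 assert (Hbh : b * (eta psi (INR n) - INR n) <= INR n).
 { unfold mu in Hb. apply Rmult_le_reg_r with (/ (eta psi (INR n) - INR n)).
   apply Rinv_0_lt_compat; auto. rewrite Rmult_assoc, Rinv_r, Rmult_1_r by lra. unfold Rdiv in Hb. lra. }
 assert (Hb2' : 2 < b) by lra. assert (Ha1' : 1 < a) by lra.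
 split; [|split; [|split; [|split]]].
 - intros t. apply (ucv _ (fun i => psi (INR (n + i))) (psi (INR n) * (1 + 2 * b * (eta psi (INR n) - INR n) / (b - 1)))).
   intros; apply tail_abs; auto. intros; apply tail_sum_bound; auto.
 - intros t Ht. apply i_final; auto.
 - intros t. apply ii_final; auto.
 - intros q Hq. apply iii_final; auto.
 - intros t Ht. destruct (iii_point psi beta n a b t HM Hmu' HnR Hb2' Hbh Ha1' Hah Ht) as [H1 _].
   eapply Rle_trans. apply H1. pose proof (psi_pos psi HM _ HnR) as HP.
   assert (HC0 : 0 < 2 * b / (b - 2)) by (apply Rmult_lt_0_compat; [lra| apply Rinv_0_lt_compat; lra]).
   assert (HA0 : 0 < a / (a - 1)) by (apply Rmult_lt_0_compat; [lra| apply Rinv_0_lt_compat; lra]).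
   assert (0 < (2 * b / (b - 2) + a / (a - 1)) * psi (INR n) * (eta psi (INR n) - INR n))
     by (apply Rmult_lt_0_compat; [apply Rmult_lt_0_compat; lra| lra]).
   assert (1 <= 2 * (1 + PI ^ 2)) by (pose proof (pow2_ge_0 PI); lra).
   replace (2 * (1 + PI ^ 2) * (2 * b / (b - 2) + a / (a - 1)) * psi (INR n) * (eta psi (INR n) - INR n))
     with (2 * (1 + PI ^ 2) * ((2 * b / (b - 2) + a / (a - 1)) * psi (INR n) * (eta psi (INR n) - INR n))) by ring.
   nra.
Qed.
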